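(* The logic $\mathbf{DL}(\partial)$ can simulate $\mathbf{DL}(\partial^* )$ with respect to addition of rules, and the logic $\mathbf{DL}(\delta)$ can simulate $\mathbf{DL}(\delta^* )$ with respect to addition of rules. Explicitly, for $(d_1,d_2)\in\{(\partial^*,\partial),(\delta^*,\delta)\}$ and for every defeasible theory $D$, there is a defeasible theory $D'$ with the following property. For every theory $A=(\emptyset,R_A,\emptyset)$ consisting only of rules that is modular with respect to $D$ and $D'$, and for every literal $q\in\Sigma(D+A)$: - $D+A\vdash+d_1q$ iff $D'+A\vdash+d_2q$, and - $D+A\vdash-d_1q$ iff $D'+A\vdash-d_2q$.
   Context: Defeasible theories. Literals come from a language closed under negation. For a literal $q$, its complement ${\sim}q$ is $\neg p$ if $q=p$ is a proposition, and $p$ if $q=\neg p$. A defeasible theory $D=(F,R,>)$ consists of: - a set $F$ of literals (the facts); - a finite set $R$ of rules, each with a distinct label; - an acyclic binary relation $>$ on labels (the superiority relation). Each rule $r$ has a finite set $A(r)$ of body literals and a head literal. A rule is one of: - strict ($\rightarrow$); - defeasible ($\Rightarrow$); - a defeater ($\leadsto$). Notation: $R_s$ is the set of strict rules, $R_{sd}$ the set of strict or defeasible rules, and $R[q]$, $R_s[q]$, $R_{sd}[q]$ are the corresponding sets of rules with head $q$. $\Sigma(D)$ and $\Lambda(D)$ are the literals and the labels occurring in $D$. Conclusions. Conclusions have the form $\pm d\,q$ for a tag $d\in\{\Delta,\partial,\partial^*,\delta,\sigma,\delta^*,\sigma^*\}$. The conclusions of $D$ are $\bigcup_n\mathcal T_D\uparrow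 n$, where $\mathcal T_D\uparrow 0=\emptyset$ and $\mathcal T_D\uparrow(n+1)=\mathcal T_D(\mathcal T_D\uparrow n)$. We write $D\vdash\alpha$ when $\alpha$ is a conclusion of $D$. For a set $B$ of literals, ''$+dB\subseteq E$'' means $+d\,a\in E$ for all $a\in B$. The operator $\mathcal T_D$ is defined by the following clauses. $+\Delta q\in\mathcal T_D(E)$ iff $q\in F$, or some $r\in R_s[q]$ has $+\Delta A(r)\subseteq E$. $-\Delta q\in\mathcal T_D(E)$ iff $q\notin F$ and every $r\in R_s[q]$ has some $a\in A(r)$ with $-\Delta a\in E$. $+\partial q\in\mathcal T_D(E)$ iff either $+\Delta q\in E$, or all of the following hold: - some $r\in R_{sd}[q]$ has $+\partial A(r)\subseteq E$; - $-\Delta{\sim}q\in E$; - every $s\in R[{\sim}q]$ either has some $a\in A(s)$ with $-\partial a\in E$, or there is $t\in R_{sd}[q]$ with $+\partial A(t)\subseteq E$ and $t>s$. $-\partial q\in\mathcal T_D(E)$ iff $-\Delta q\in E$ and one of the following holds: - every $r\in R_{sd}[q]$ has some $a\in A(r)$ with $-\partial a\in E$; - $+\Delta{\sim}q\in E$; - some $s\in R[{\sim}q]$ has $+\partial A(s)\subseteq E$ and every $t\in R_{sd}[q]$ has some $a\in A(t)$ with $-\partial a\in E$ or not $t>s$. $+\partial^*q\in\mathcal T_D(E)$ iff either $+\Delta q\in E$, or some $r\in R_{sd}[q]$ satisfies: - $+\partial^*A(r)\subseteq E$; - $-\Delta{\sim}q\in E$; - every $s\in R[{\sim}q]$ has some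 $a\in A(s)$ with $-\partial^*a\in E$, or $r>s$. $-\partial^*q\in\mathcal T_D(E)$ iff $-\Delta q\in E$ and every $r\in R_{sd}[q]$ satisfies one of: - some $a\in A(r)$ has $-\partial^*a\in E$; - $+\Delta{\sim}q\in E$; - some $s\in R[{\sim}q]$ has $+\partial^*A(s)\subseteq E$ and not $r>s$. $\pm\delta$ are defined exactly as $\pm\partial$, with $\partial$ replaced by $\delta$, with two exceptions. In the $+\delta$ clause, the escape for $s$ is ''some $a\in A(s)$ has $-\sigma a\in E$''. In the $-\delta$ clause, the condition on $s$ is ''$+\sigma A(s)\subseteq E$''. $+\sigma q\in\mathcal T_D(E)$ iff either $+\Delta q\in E$, or some $r\in R_{sd}[q]$ has $+\sigma A(r)\subseteq E$ and every $s\in R[{\sim}q]$ has some $a\in A(s)$ with $-\delta a\in E$ or not $s>r$. $-\sigma q\in\mathcal T_D(E)$ iff $-\Delta q\in E$ and every $r\in R_{sd}[q]$ has some $a\in A(r)$ with $-\sigma a\in E$, or there is $s\in R[{\sim}q]$ with $+\delta A(s)\subseteq E$ and $s>r$. $\pm\delta^*$ are defined exactly as $\pm\partial^*$, with $\partial^*$ replaced by $\delta^*$, with two exceptions. In the $+\delta^*$ clause, the escape for $s$ is ''some $a\in A(s)$ has $-\sigma^*a\in E$''. In the $-\delta^*$ clause, the condition on $s$ is ''$+\sigma^*A(s)\subseteq E$''. $\pm\sigma^*$ are defined exactly as $\pm\sigma$, with $\sigma,\delta$ replaced by $\sigma^*,\delta^*$ respectively. $\mathbf{DL}(d)$ denotes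 the logic with principal tag $d$. Addition. For theories $D=(F,R,>)$ and $A=(F',R',>')$ with disjoint label sets, define $D+A=(F\cup F',R\cup R',>\cup>')$. Given theories $D_1,D_2$, an addition $A$ is modular if - $\Sigma(A)\cap\Sigma(D_2)\subseteq\Sigma(D_1)$, - $\Lambda(D_1)\cap\Lambda(A)=\emptyset$, and - $\Lambda(D_2)\cap\Lambda(A)=\emptyset$. Simulation. $\mathbf{DL}(d_1)$ can be simulated by $\mathbf{DL}(d_2)$ with respect to addition of rules if every theory $D_1$ has a theory $D_2$ such that, for every modular addition $A$ of the form $(\emptyset,R,\emptyset)$ and every $q\in\Sigma(D_1+A)$: - $D_1+A\vdash\pm d_1q$ iff $D_2+A\vdash\pm d_2q$ (same sign). *)

(* Defs.v *)
From Stdlib Require Import List Relations.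
Import ListNotations.

Definition atom := nat.
Definition label := nat.

Inductive lit : Type := Pos (p : atom) | Neg (p : atom).

Definition compl (q : lit) : lit :=
  match q with Pos p => Neg p | Neg p => Pos p end.

Inductive rkind : Type := Strict | Defeasible | Defeater.

Record rule : Type := mkRule {
  rlabel : label;
  rbody  : list lit;
  rhead  : lit;
  rkind_ : rkind }.

(* D = (F, R, >) ; superiority given as a finite set of pairs (t, s) meaning t > s *)
Record theory : Type := mkTheory {
  facts : list lit;
  rules : list rule;
  sup   : list (label * label) }.

Definition supR (D : theory) (t s : label) : Prop := In (t, s) (sup D).

Definition wf_theory (D : theory) : Prop :=
  NoDup (map rlabel (rules D)) /\
  forall x, ~ clos_trans label (supR D) x x.

Definition in_Rs (D : theory) (q : lit) (r : rule) : Prop :=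
  In r (rules D) /\ rhead r = q /\ rkind_ r = Strict.
Definition in_Rsd (D : theory) (q : lit) (r : rule) : Prop :=
  In r (rules D) /\ rhead r = q /\ (rkind_ r = Strict \/ rkind_ r = Defeasible).
Definition in_R (D : theory) (q : lit) (r : rule) : Prop :=
  In r (rules D) /\ rhead r = q.

Definition rsup (D : theory) (t s : rule) : Prop := supR D (rlabel t) (rlabel s).

Inductive tag : Type := TDelta | TPd | TPdStar | TDel | TSig | TDelStar | TSigStar.
Inductive sign : Type := Plus | Minus.

Definition concl : Type := (sign * tag * lit)%type.
Definition cset : Type := concl -> Prop.

Definition pl (E : cset) (d : tag) (a : lit) : Prop := E (Plus, d, a).
Definition mi (E : cset) (d : tag) (a : lit) : Prop := E (Minus, d, a).

Definition allP (E : cset) (d : tag) (r : rule) : Prop := forall a, In a (rbody r) -> pl E d a.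
Definition someM (E : cset) (d : tag) (r : rule) : Prop := exists a, In a (rbody r) /\ mi E d a.

(* Generic ambiguity-blocking clause family (partial / delta):
   d = tag being defined, e = tag used for attacking rules. *)
Definition plus_amb (D : theory) (E : cset) (d e : tag) (q : lit) : Prop :=
  pl E TDelta q \/
  ((exists r, in_Rsd D q r /\ allP E d r) /\
   mi E TDelta (compl q) /\
   (forall s, in_R D (compl q) s ->
      someM E e s \/ exists t, in_Rsd D q t /\ allP E d t /\ rsup D t s)).

Definition minus_amb (D : theory) (E : cset) (d e : tag) (q : lit) : Prop :=
  mi E TDelta q /\
  ((forall r, in_Rsd D q r -> someM E d r) \/
   pl E TDelta (compl q) \/
   (exists s, in_R D (compl q) s /\ allP E e s /\
      forall t, in_Rsd D q t -> someM E d t \/ ~ rsup D t s)).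

(* Individual-defeat clause family (partial-star / delta-star) *)
Definition plus_star (D : theory) (E : cset) (d e : tag) (q : lit) : Prop :=
  pl E TDelta q \/
  (exists r, in_Rsd D q r /\ allP E d r /\ mi E TDelta (compl q) /\
     forall s, in_R D (compl q) s -> someM E e s \/ rsup D r s).

Definition minus_star (D : theory) (E : cset) (d e : tag) (q : lit) : Prop :=
  mi E TDelta q /\
  (forall r, in_Rsd D q r ->
     someM E d r \/ pl E TDelta (compl q) \/
     exists s, in_R D (compl q) s /\ allP E e s /\ ~ rsup D r s).

(* Support clause family (sigma / sigma-star): d = support tag, e = attacking tag *)
Definition plus_sig (D : theory) (E : cset) (d e : tag) (q : lit) : Prop :=
  pl E TDelta q \/
  (exists r, in_Rsd D q r /\ allP E d r /\
     forall s, in_R D (compl q) s -> someM E e s \/ ~ rsup D s r).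

Definition minus_sig (D : theory) (E : cset) (d e : tag) (q : lit) : Prop :=
  mi E TDelta q /\
  (forall r, in_Rsd D q r ->
     someM E d r \/ exists s, in_R D (compl q) s /\ allP E e s /\ rsup D s r).

Definition T (D : theory) (E : cset) (c : concl) : Prop :=
  match c with
  | (Plus, TDelta, q) =>
      In q (facts D) \/ exists r, in_Rs D q r /\ allP E TDelta r
  | (Minus, TDelta, q) =>
      ~ In q (facts D) /\ forall r, in_Rs D q r -> someM E TDelta r
  | (Plus, TPd, q) => plus_amb D E TPd TPd q
  | (Minus, TPd, q) => minus_amb D E TPd TPd q
  | (Plus, TPdStar, q) => plus_star D E TPdStar TPdStar q
  | (Minus, TPdStar, q) => minus_star D E TPdStar TPdStar q
  | (Plus, TDel, q) => plus_amb D E TDel TSig q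
  | (Minus, TDel, q) => minus_amb D E TDel TSig q
  | (Plus, TSig, q) => plus_sig D E TSig TDel q
  | (Minus, TSig, q) => minus_sig D E TSig TDel q
  | (Plus, TDelStar, q) => plus_star D E TDelStar TSigStar q
  | (Minus, TDelStar, q) => minus_star D E TDelStar TSigStar q
  | (Plus, TSigStar, q) => plus_sig D E TSigStar TDelStar q
  | (Minus, TSigStar, q) => minus_sig D E TSigStar TDelStar q
  end.

Fixpoint Titer (D : theory) (n : nat) : cset :=
  match n with
  | O => fun _ => False
  | S m => T D (Titer D m)
  end.

Definition derives (D : theory) (c : concl) : Prop := exists n, Titer D n c.

Definition Sigma (D : theory) (q : lit) : Prop :=
  In q (facts D) \/
  exists r, In r (rules D) /\ (rhead r = q \/ In q (rbody r)).

Definition Lambda (D : theory) (l : label) : Prop :=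
  (exists r, In r (rules D) /\ rlabel r = l) \/
  (exists l', In (l, l') (sup D) \/ In (l', l) (sup D)).

Definition add (D A : theory) : theory :=
  mkTheory (facts D ++ facts A) (rules D ++ rules A) (sup D ++ sup A).

Definition modular (D1 D2 A : theory) : Prop :=
  (forall q, Sigma A q -> Sigma D2 q -> Sigma D1 q) /\
  (forall l, Lambda D1 l -> Lambda A l -> False) /\
  (forall l, Lambda D2 l -> Lambda A l -> False).

Definition simulates (d1 d2 : tag) : Prop :=
  forall D1 : theory, wf_theory D1 ->
  exists D2 : theory, wf_theory D2 /\
    forall RA : list rule,
      let A := mkTheory [] RA [] in
      wf_theory A -> modular D1 D2 A ->
      forall q, Sigma (add D1 A) q ->
        (derives (add D1 A) (Plus, d1, q) <-> derives (add D2 A) (Plus, d2, q)) /\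
        (derives (add D1 A) (Minus, d1, q) <-> derives (add D2 A) (Minus, d2, q)).

(* Main.v *)
Require Import Defs.
From Stdlib Require Import List Relations Lia Arith Classical Cantor.
Import ListNotations.


Definition incl_c (E E' : cset) := forall c, E c -> E' c.

Lemma allP_mono E E' d r : incl_c E E' -> allP E d r -> allP E' d r.
Proof. unfold allP, pl; intros H H1 a Ha; apply H, H1, Ha. Qed.
Lemma someM_mono E E' d r : incl_c E E' -> someM E d r -> someM E' d r.
Proof. unfold someM, mi; intros H [a [Ha H1]]; exists a; split; auto. Qed.
Lemma pl_mono E E' d a : incl_c E E' -> pl E d a -> pl E' d a.
Proof. unfold pl; auto. Qed.
Lemma mi_mono E E' d a : incl_c E E' -> mi E d a -> mi E' d a.
Proof. unfold mi; auto. Qed.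

Ltac mt H := first [ eapply (allP_mono _ _ _ _ H); eassumption
                   | eapply (someM_mono _ _ _ _ H); eassumption
                   | eapply (pl_mono _ _ _ _ H); eassumption
                   | eapply (mi_mono _ _ _ _ H); eassumption ].

Lemma plus_amb_mono X E E' d e q : incl_c E E' -> plus_amb X E d e q -> plus_amb X E' d e q.
Proof.
  intros H [H1|[[r [Hr1 Hr2]] [H2 H3]]]; [left; mt H|right].
  split; [exists r; split; [auto| mt H]|split; [mt H|]].
  intros s Hs; destruct (H3 s Hs) as [H4|[t [Ht1 [Ht2 Ht3]]]]; [left; mt H|right].
  exists t; split; [auto|split; [mt H|auto]].
Qed.
Lemma minus_amb_mono X E E' d e q : incl_c E E' -> minus_amb X E d e q -> minus_amb X E' d e q.
Proof.
  intros H [H0 [H1|[H1|[s [Hs1 [Hs2 Hs3]]]]]]; (split; [mt H|]).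
  - left; intros r Hr; specialize (H1 r Hr); mt H.
  - right; left; mt H.
  - right; right; exists s; split; [auto|split; [mt H|]].
    intros t Ht; destruct (Hs3 t Ht); [left; mt H|right; auto].
Qed.
Lemma plus_star_mono X E E' d e q : incl_c E E' -> plus_star X E d e q -> plus_star X E' d e q.
Proof.
  intros H [H1|[r [Hr1 [Hr2 [Hr3 Hr4]]]]]; [left; mt H|right].
  exists r; split; [auto|split; [mt H|split; [mt H|]]].
  intros s Hs; destruct (Hr4 s Hs); [left; mt H|right; auto].
Qed.
Lemma minus_star_mono X E E' d e q : incl_c E E' -> minus_star X E d e q -> minus_star X E' d e q.
Proof.
  intros H [H0 H1]; split; [mt H|].
  intros r Hr; destruct (H1 r Hr) as [H2|[H2|[s [Hs1 [Hs2 Hs3]]]]].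
  - left; mt H.
  - right; left; mt H.
  - right; right; exists s; split; [auto|split; [mt H|auto]].
Qed.
Lemma plus_sig_mono X E E' d e q : incl_c E E' -> plus_sig X E d e q -> plus_sig X E' d e q.
Proof.
  intros H [H1|[r [Hr1 [Hr2 Hr3]]]]; [left; mt H|right].
  exists r; split; [auto|split; [mt H|]].
  intros s Hs; destruct (Hr3 s Hs); [left; mt H|right; auto].
Qed.
Lemma minus_sig_mono X E E' d e q : incl_c E E' -> minus_sig X E d e q -> minus_sig X E' d e q.
Proof.
  intros H [H0 H1]; split; [mt H|].
  intros r Hr; destruct (H1 r Hr) as [H2|[s [Hs1 [Hs2 Hs3]]]].
  - left; mt H.
  - right; exists s; split; [auto|split; [mt H|auto]].
Qed.

Lemma T_mono X E E' c : incl_c E E' -> T X E c -> T X E' c.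
Proof.
  intros H. destruct c as [[sg t] q].
  destruct sg, t; simpl;
  first [ apply plus_amb_mono | apply minus_amb_mono | apply plus_star_mono
        | apply minus_star_mono | apply plus_sig_mono | apply minus_sig_mono | idtac ];
  auto.
  - intros [H1|[r [H1 H2]]]; [left; auto|right; exists r; split; auto; mt H].
  - intros [H1 H2]; split; auto; intros r Hr; specialize (H2 r Hr); mt H.
Qed.


Lemma Titer_step X n : incl_c (Titer X n) (Titer X (S n)).
Proof.
  induction n; intros c H; [destruct H|].
  simpl in *. eapply T_mono; [exact IHn|exact H].
Qed.
Lemma Titer_le X n m : n <= m -> incl_c (Titer X n) (Titer X m).
Proof.
  induction 1; intros c Hc; auto. apply Titer_step; auto.
Qed.
Lemma Titer_Der X n : incl_c (Titer X n) (derives X).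
Proof. intros c H; exists n; auto. Qed.

Lemma fin_forall {A} (l : list A) (F : A -> Prop) (Q : nat -> A -> Prop) :
  (forall n m x, n <= m -> Q n x -> Q m x) ->
  (forall x, In x l -> F x -> exists n, Q n x) -> exists n, forall x, In x l -> F x -> Q n x.
Proof.
  intros Hm; induction l as [|a l IH]; intros H.
  - exists 0; intros x [].
  - destruct IH as [n1 H1]. { intros x Hx; apply H; simpl; auto. }
    destruct (classic (F a)) as [Fa|Fa].
    + destruct (H a (or_introl eq_refl) Fa) as [n2 H2].
      exists (n1 + n2); intros x [<-|Hx] Fx.
      * eapply Hm; [|exact H2]; lia.
      * eapply Hm; [|apply H1; auto]; lia.
    + exists n1; intros x [<-|Hx] Fx; [contradiction|auto].
Qed.

Section Compact.
Variable X : theory.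
Notation Der := (derives X).
Notation Ti := (Titer X).

Lemma c_allP d r : allP Der d r -> exists n, allP (Ti n) d r.
Proof.
  intros H. unfold allP, pl in *.
  destruct (fin_forall (rbody r) (fun _ => True) (fun n a => Ti n (Plus, d, a))) as [n Hn].
  - intros n m x Hnm Hx; eapply Titer_le; eauto.
  - intros x Hx _; apply H; auto.
  - exists n; intros a Ha; apply Hn; auto.
Qed.
Lemma c_someM d r : someM Der d r -> exists n, someM (Ti n) d r.
Proof. intros [a [Ha [n Hn]]]; exists n, a; auto. Qed.

Ltac up := match goal with
  | H : allP (Ti ?n) ?d ?r |- allP (Ti ?m) ?d ?r => apply (allP_mono _ _ _ _ (Titer_le X n m ltac:(lia)) H)
  | H : someM (Ti ?n) ?d ?r |- someM (Ti ?m) ?d ?r => apply (someM_mono _ _ _ _ (Titer_le X n m ltac:(lia)) H)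
  | H : pl (Ti ?n) ?d ?r |- pl (Ti ?m) ?d ?r => apply (pl_mono _ _ _ _ (Titer_le X n m ltac:(lia)) H)
  | H : mi (Ti ?n) ?d ?r |- mi (Ti ?m) ?d ?r => apply (mi_mono _ _ _ _ (Titer_le X n m ltac:(lia)) H)
  | H : Ti ?n (Minus, ?d, ?r) |- mi (Ti ?m) ?d ?r => apply (Titer_le X n m ltac:(lia)); exact H
  | H : Ti ?n (Plus, ?d, ?r) |- pl (Ti ?m) ?d ?r => apply (Titer_le X n m ltac:(lia)); exact H
  end.

Lemma c_plus_amb d e q : plus_amb X Der d e q -> exists n, plus_amb X (Ti n) d e q.
Proof.
  intros [[n H]|[[r [Hr1 Hr2]] [[n2 H2] H3]]]; [exists n; left; exact H|].
  destruct (c_allP _ _ Hr2) as [n1 H1].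
  destruct (fin_forall (rules X) (fun s => rhead s = compl q)
     (fun n s => someM (Ti n) e s \/ exists t, in_Rsd X q t /\ allP (Ti n) d t /\ rsup X t s)) as [n3 H4].
  - intros n m s Hnm [Hs|[t [Ht1 [Ht2 Ht3]]]]; [left; up|right; exists t; split; [auto|split; [up|auto]]].
  - intros s Hs Hh; destruct (H3 s (conj Hs Hh)) as [Hs'|[t [Ht1 [Ht2 Ht3]]]].
    + destruct (c_someM _ _ Hs') as [n Hn]; exists n; left; auto.
    + destruct (c_allP _ _ Ht2) as [n Hn]; exists n; right; exists t; auto.
  - exists (n1 + n2 + n3); right; split; [exists r; split; [auto|up]|split; [up|]].
    intros s [Hs Hh]; destruct (H4 s Hs Hh) as [Hs'|[t [Ht1 [Ht2 Ht3]]]]; [left; up|right; exists t; split; [auto|split; [up|auto]]].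
Qed.

Lemma c_minus_amb d e q : minus_amb X Der d e q -> exists n, minus_amb X (Ti n) d e q.
Proof.
  intros [[n0 H0] [H1|[[n1 H1]|[s [Hs1 [Hs2 Hs3]]]]]].
  - destruct (fin_forall (rules X) (fun r => rhead r = q /\ (rkind_ r = Strict \/ rkind_ r = Defeasible))
       (fun n r => someM (Ti n) d r)) as [n1 H4].
    + intros n m s Hnm Hs; up.
    + intros r Hr Hh; apply c_someM, H1; split; auto.
    + exists (n0 + n1); split; [up|left]. intros r [Hr Hh]; specialize (H4 r Hr Hh); up.
  - exists (n0 + n1); split; [up|right; left; up].
  - destruct (c_allP _ _ Hs2) as [n1 H1].
    destruct (fin_forall (rules X) (fun r => rhead r = q /\ (rkind_ r = Strict \/ rkind_ r = Defeasible))
       (fun n t => someM (Ti n) d t \/ ~ rsup X t s)) as [n2 H4].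
    + intros n m t Hnm [Ht|Ht]; [left; up|right; auto].
    + intros t Ht Hh; destruct (Hs3 t (conj Ht Hh)) as [Ht'|Ht'].
      * destruct (c_someM _ _ Ht') as [n Hn]; exists n; left; auto.
      * exists 0; right; auto.
    + exists (n0 + n1 + n2); split; [up|right; right; exists s; split; [auto|split; [up|]]].
      intros t [Ht Hh]; destruct (H4 t Ht Hh) as [Ht'|Ht']; [left; up|right; auto].
Qed.

Lemma c_plus_star d e q : plus_star X Der d e q -> exists n, plus_star X (Ti n) d e q.
Proof.
  intros [[n H]|[r [Hr1 [Hr2 [[n2 H2] H3]]]]]; [exists n; left; exact H|].
  destruct (c_allP _ _ Hr2) as [n1 H1].
  destruct (fin_forall (rules X) (fun s => rhead s = compl q)
     (fun n s => someM (Ti n) e s \/ rsup X r s)) as [n3 H4].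
  - intros n m s Hnm [Hs|Hs]; [left; up|right; auto].
  - intros s Hs Hh; destruct (H3 s (conj Hs Hh)) as [Hs'|Hs'].
    + destruct (c_someM _ _ Hs') as [n Hn]; exists n; left; auto.
    + exists 0; right; auto.
  - exists (n1 + n2 + n3); right; exists r; split; [auto|split; [up|split; [up|]]].
    intros s [Hs Hh]; destruct (H4 s Hs Hh) as [Hs'|Hs']; [left; up|right; auto].
Qed.

Lemma c_minus_star d e q : minus_star X Der d e q -> exists n, minus_star X (Ti n) d e q.
Proof.
  intros [[n0 H0] H1].
  destruct (fin_forall (rules X) (fun r => rhead r = q /\ (rkind_ r = Strict \/ rkind_ r = Defeasible))
     (fun n r => someM (Ti n) d r \/ pl (Ti n) TDelta (compl q) \/
        exists s, in_R X (compl q) s /\ allP (Ti n) e s /\ ~ rsup X r s)) as [n1 H4].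
  - intros n m r Hnm [H|[H|[s [Hs1 [Hs2 Hs3]]]]]; [left; up|right; left; up|right; right; exists s; split; [auto|split; [up|auto]]].
  - intros r Hr Hh; destruct (H1 r (conj Hr Hh)) as [H|[[n H]|[s [Hs1 [Hs2 Hs3]]]]].
    + destruct (c_someM _ _ H) as [n Hn]; exists n; left; auto.
    + exists n; right; left; auto.
    + destruct (c_allP _ _ Hs2) as [n Hn]; exists n; right; right; exists s; auto.
  - exists (n0 + n1); split; [up|]. intros r [Hr Hh].
    destruct (H4 r Hr Hh) as [H|[H|[s [Hs1 [Hs2 Hs3]]]]]; [left; up|right; left; up|right; right; exists s; split; [auto|split; [up|auto]]].
Qed.

Lemma c_plus_sig d e q : plus_sig X Der d e q -> exists n, plus_sig X (Ti n) d e q.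
Proof.
  intros [[n H]|[r [Hr1 [Hr2 H3]]]]; [exists n; left; exact H|].
  destruct (c_allP _ _ Hr2) as [n1 H1].
  destruct (fin_forall (rules X) (fun s => rhead s = compl q)
     (fun n s => someM (Ti n) e s \/ ~ rsup X s r)) as [n3 H4].
  - intros n m s Hnm [Hs|Hs]; [left; up|right; auto].
  - intros s Hs Hh; destruct (H3 s (conj Hs Hh)) as [Hs'|Hs'].
    + destruct (c_someM _ _ Hs') as [n Hn]; exists n; left; auto.
    + exists 0; right; auto.
  - exists (n1 + n3); right; exists r; split; [auto|split; [up|]].
    intros s [Hs Hh]; destruct (H4 s Hs Hh) as [Hs'|Hs']; [left; up|right; auto].
Qed.

Lemma c_minus_sig d e q : minus_sig X Der d e q -> exists n, minus_sig X (Ti n) d e q.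
Proof.
  intros [[n0 H0] H1].
  destruct (fin_forall (rules X) (fun r => rhead r = q /\ (rkind_ r = Strict \/ rkind_ r = Defeasible))
     (fun n r => someM (Ti n) d r \/
        exists s, in_R X (compl q) s /\ allP (Ti n) e s /\ rsup X s r)) as [n1 H4].
  - intros n m r Hnm [H|[s [Hs1 [Hs2 Hs3]]]]; [left; up|right; exists s; split; [auto|split; [up|auto]]].
  - intros r Hr Hh; destruct (H1 r (conj Hr Hh)) as [H|[s [Hs1 [Hs2 Hs3]]]].
    + destruct (c_someM _ _ H) as [n Hn]; exists n; left; auto.
    + destruct (c_allP _ _ Hs2) as [n Hn]; exists n; right; exists s; auto.
  - exists (n0 + n1); split; [up|]. intros r [Hr Hh].
    destruct (H4 r Hr Hh) as [H|[s [Hs1 [Hs2 Hs3]]]]; [left; up|right; exists s; split; [auto|split; [up|auto]]].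
Qed.

Lemma closure c : T X Der c -> Der c.
Proof.
  destruct c as [[sg t] q]; intros H.
  assert (exists n, T X (Ti n) (sg, t, q)) as [n Hn].
  { destruct sg, t; simpl in *;
    first [ apply c_plus_amb | apply c_minus_amb | apply c_plus_star
          | apply c_minus_star | apply c_plus_sig | apply c_minus_sig | idtac ]; auto.
    - destruct H as [H|[r [Hr H]]]; [exists 0; left; auto|].
      destruct (c_allP _ _ H) as [n Hn]; exists n; right; exists r; auto.
    - destruct H as [H0 H].
      destruct (fin_forall (rules X) (fun r => rhead r = q /\ rkind_ r = Strict)
        (fun n r => someM (Ti n) TDelta r)) as [n Hn].
      + intros n m r Hnm Hr; up.
      + intros r Hr Hh; apply c_someM, H; split; auto.
      + exists n; split; auto; intros r [Hr Hh]; auto. }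
  exists (S n); exact Hn.
Qed.

Lemma unfoldD c : Der c -> T X Der c.
Proof.
  intros [n Hn]; destruct n; [destruct Hn|].
  eapply T_mono; [apply Titer_Der|exact Hn].
Qed.

Lemma Der_ind (S : cset) : (forall c, T X S c -> S c) -> forall c, Der c -> S c.
Proof.
  intros H c [n Hn]; revert c Hn; induction n; intros c Hn; [destruct Hn|].
  apply H; eapply T_mono; [exact IHn|exact Hn].
Qed.
End Compact.


Definition lit_eq_dec (a b : lit) : {a = b} + {a <> b}.
Proof. decide equality; apply Nat.eq_dec. Defined.
Definition rkind_eq_dec (a b : rkind) : {a = b} + {a <> b}.
Proof. decide equality. Defined.
Definition rule_eq_dec (a b : rule) : {a = b} + {a <> b}.
Proof. decide equality; try apply rkind_eq_dec; try apply lit_eq_dec;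
  try apply (list_eq_dec lit_eq_dec); apply Nat.eq_dec. Defined.
Definition pair_eq_dec (a b : nat * nat) : {a = b} + {a <> b}.
Proof. decide equality; apply Nat.eq_dec. Defined.
Definition sup_dec (D : theory) (r s : rule) : {rsup D r s} + {~ rsup D r s}.
Proof. unfold rsup, supR; apply in_dec, pair_eq_dec. Defined.

Definition atom_of (q : lit) : nat := match q with Pos p => p | Neg p => p end.
Definition maxA (D : theory) : nat :=
  fold_right max 0 (map atom_of (facts D ++ flat_map (fun r => rhead r :: rbody r) (rules D))).
Definition NN (D : theory) := S (maxA D).

Lemma fold_max_ge l x : In x l -> x <= fold_right max 0 l.
Proof. induction l; simpl; [intros []|]. intros [H|H]; subst; try lia. specialize (IHl H); lia. Qed.

Lemma Sigma_lt D q : Sigma D q -> atom_of q < NN D.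
Proof.
  intros H; unfold NN, maxA. apply Nat.lt_succ_r. apply fold_max_ge. apply in_map. apply in_or_app.
  destruct H as [H|[r [Hr H]]]; [left; auto|right].
  apply in_flat_map; exists r; split; [auto|]; destruct H as [H|H]; [left; auto|right; auto].
Qed.

Section Constr.
Variable D : theory.
Definition lab (k : nat) (a b : rule) : nat := k + 8 * Cantor.to_nat (rlabel a, rlabel b).
Definition ca (r : rule) : nat := NN D + 2 * rlabel r.
Definition va (r : rule) : nat := NN D + 2 * rlabel r + 1.

Definition GC r := mkRule (lab 0 r r) (rbody r) (Pos (ca r)) (rkind_ r).
Definition GW r := mkRule (lab 1 r r) [Pos (ca r)] (rhead r) (rkind_ r).
Definition DC r := mkRule (lab 2 r r) [Neg (ca r)] (Pos (ca r)) Defeater.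
Definition GV s := mkRule (lab 3 s s) (rbody s) (Pos (va s)) Defeasible.
Definition GVD s := mkRule (lab 4 s s) [Pos (va s)] (rhead s) Defeater.
Definition DV s := mkRule (lab 5 s s) [Neg (va s)] (Pos (va s)) Defeater.
Definition GA s r := mkRule (lab 6 s r) (rbody s) (Neg (ca r)) Defeater.
Definition GVA r s := mkRule (lab 7 r s) [Pos (ca r)] (Neg (va s)) Defeater.

Definition nondef (r : rule) := rkind_ r <> Defeater.

Definition genOne (r : rule) : list rule :=
  (if rkind_eq_dec (rkind_ r) Defeater then [] else [GC r; GW r; DC r]) ++ [GV r; GVD r; DV r].
Definition genPair (s r : rule) : list rule :=
  if rkind_eq_dec (rkind_ r) Defeater then [] else
  if lit_eq_dec (rhead s) (compl (rhead r)) then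
    (if sup_dec D r s then [GVA r s] else [GA s r])
  else [].
Definition genSup (s r : rule) : list (label * label) :=
  if rkind_eq_dec (rkind_ r) Defeater then [] else
  if lit_eq_dec (rhead s) (compl (rhead r)) then
    (if sup_dec D r s then [(lab 7 r s, lab 3 s s)] else
     if sup_dec D s r then [(lab 6 s r, lab 0 r r)] else [])
  else [].
Definition genAll : list rule :=
  flat_map genOne (rules D) ++ flat_map (fun s => flat_map (genPair s) (rules D)) (rules D).
Definition D2 : theory :=
  mkTheory (facts D) (nodup rule_eq_dec genAll)
    (flat_map (fun s => flat_map (genSup s) (rules D)) (rules D)).

Lemma in_D2 t : In t (rules D2) <->
  (exists r, In r (rules D) /\ (
     (nondef r /\ (t = GC r \/ t = GW r \/ t = DC r)) \/ t = GV r \/ t = GVD r \/ t = DV r)) \/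
  (exists s r, In s (rules D) /\ In r (rules D) /\ nondef r /\ rhead s = compl (rhead r) /\
     ((rsup D r s /\ t = GVA r s) \/ (~ rsup D r s /\ t = GA s r))).
Proof.
  unfold D2; simpl; rewrite nodup_In; unfold genAll; rewrite in_app_iff, !in_flat_map.
  split.
  - intros [[r [Hr Ht]]|[s [Hs Ht]]].
    + left; exists r; split; auto. unfold genOne in Ht; rewrite in_app_iff in Ht.
      destruct (rkind_eq_dec (rkind_ r) Defeater) as [Hd|Hd]; simpl in Ht; intuition.
    + right; rewrite in_flat_map in Ht; destruct Ht as [r [Hr Ht]]; exists s, r.
      unfold genPair in Ht.
      destruct (rkind_eq_dec (rkind_ r) Defeater) as [Hd|Hd]; [destruct Ht|].
      destruct (lit_eq_dec (rhead s) (compl (rhead r))) as [He|He]; [|destruct Ht].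
      destruct (sup_dec D r s); simpl in Ht; intuition.
  - intros [[r [Hr Ht]]|[s [r [Hs [Hr [Hd [He Ht]]]]]]].
    + left; exists r; split; auto. unfold genOne; rewrite in_app_iff.
      destruct (rkind_eq_dec (rkind_ r) Defeater) as [Hd|Hd]; simpl; unfold nondef in *; intuition.
    + right; exists s; split; auto; apply in_flat_map; exists r; split; auto.
      unfold genPair; destruct (rkind_eq_dec (rkind_ r) Defeater) as [Hd'|Hd']; [contradiction|].
      destruct (lit_eq_dec (rhead s) (compl (rhead r))) as [He'|He']; [|contradiction].
      destruct (sup_dec D r s); simpl; intuition.
Qed.

Lemma in_supD2 x y : In (x, y) (sup D2) <->
  exists s r, In s (rules D) /\ In r (rules D) /\ nondef r /\ rhead s = compl (rhead r) /\
     ((rsup D r s /\ x = lab 7 r s /\ y = lab 3 s s) \/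
      (~ rsup D r s /\ rsup D s r /\ x = lab 6 s r /\ y = lab 0 r r)).
Proof.
  unfold D2; simpl; rewrite in_flat_map; split.
  - intros [s [Hs H]]; rewrite in_flat_map in H; destruct H as [r [Hr H]]; exists s, r.
    unfold genSup in H.
    destruct (rkind_eq_dec (rkind_ r) Defeater) as [Hd|Hd]; [destruct H|].
    destruct (lit_eq_dec (rhead s) (compl (rhead r))) as [He|He]; [|destruct H].
    destruct (sup_dec D r s); [|destruct (sup_dec D s r)]; simpl in H;
      (destruct H as [H|[]]; inversion H; subst) || destruct H.
    + repeat split; auto; try (left; auto; fail).
    + repeat split; auto; try (right; auto; fail).
  - intros [s [r [Hs [Hr [Hd [He Ht]]]]]].
    exists s; split; auto; apply in_flat_map; exists r; split; auto.
    unfold genSup; destruct (rkind_eq_dec (rkind_ r) Defeater) as [Hd'|Hd']; [contradiction|].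
    destruct (lit_eq_dec (rhead s) (compl (rhead r))) as [He'|He']; [|contradiction].
    destruct Ht as [[H1 [-> ->]]|[H1 [H2 [-> ->]]]].
    + destruct (sup_dec D r s); [simpl; auto|contradiction].
    + destruct (sup_dec D r s); [contradiction|]. destruct (sup_dec D s r); [simpl; auto|contradiction].
Qed.

Lemma lab_inj k a b k' a' b' : k < 8 -> k' < 8 -> lab k a b = lab k' a' b' ->
  k = k' /\ rlabel a = rlabel a' /\ rlabel b = rlabel b'.
Proof.
  unfold lab; intros H1 H2 H3.
  assert (k = k' /\ to_nat (rlabel a, rlabel b) = to_nat (rlabel a', rlabel b')) as [H4 H5] by lia.
  apply (f_equal of_nat) in H5; rewrite !cancel_of_to in H5; inversion H5; auto.
Qed.

Lemma lab_mod k a b : k < 8 -> lab k a b mod 8 = k.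
Proof.
  intros H; unfold lab. rewrite Nat.mul_comm, Nat.Div0.mod_add. apply Nat.mod_small; auto.
Qed.

End Constr.


Lemma nodup_map_inj {A B} (f : A -> B) l x y :
  NoDup (map f l) -> In x l -> In y l -> f x = f y -> x = y.
Proof.
  induction l as [|a l IH]; simpl; [intros _ []|].
  intros Hn Hx Hy He; inversion Hn as [|? ? Hn1 Hn2]; subst.
  destruct Hx as [<-|Hx], Hy as [<-|Hy]; auto.
  - exfalso; apply Hn1; rewrite He; apply in_map; auto.
  - exfalso; apply Hn1; rewrite <- He; apply in_map; auto.
Qed.

Definition aux (D : theory) (q : lit) : Prop :=
  exists r, In r (rules D) /\ ((nondef r /\ atom_of q = ca D r) \/ atom_of q = va D r).

Section Setting.
Variable D : theory.
Hypothesis wfD : wf_theory D.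
Variable RA : list rule.
Let A := mkTheory [] RA [].
Hypothesis modA : modular D (D2 D) A.

Definition X1 := add D A.
Definition X2 := add (D2 D) A.

Lemma lab_uniq r r' : In r (rules D) -> In r' (rules D) -> rlabel r = rlabel r' -> r = r'.
Proof. intros; eapply nodup_map_inj; eauto; apply wfD. Qed.

Lemma sup_irrefl r : ~ rsup D r r.
Proof. intros H; apply (proj2 wfD (rlabel r)); constructor; exact H. Qed.
Lemma sup_asym r s : rsup D r s -> ~ rsup D s r.
Proof. intros H1 H2; apply (proj2 wfD (rlabel r)); eapply t_trans; constructor; eauto. Qed.

Lemma Sigma_nonaux q : Sigma D q -> ~ aux D q.
Proof.
  intros H [r [Hr [[_ H1]|H1]]]; apply Sigma_lt in H; unfold ca, va in *; lia.
Qed.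

Lemma aux_Sigma2 q : aux D q -> Sigma (D2 D) q.
Proof.
  intros [r [Hr [[Hd H1]|H1]]]; right.
  - exists (DC D r); split.
    + apply in_D2; left; exists r; split; auto.
    + destruct q as [p|p]; simpl in H1; subst; simpl; auto.
  - exists (DV D r); split.
    + apply in_D2; left; exists r; split; auto.
    + destruct q as [p|p]; simpl in H1; subst; simpl; auto.
Qed.

Lemma SigmaA_nonaux q : Sigma A q -> ~ aux D q.
Proof.
  intros H1 H2. apply (Sigma_nonaux q); auto. apply (proj1 modA); auto. apply aux_Sigma2; auto.
Qed.

Lemma RA_head t : In t RA -> ~ aux D (rhead t).
Proof. intros H; apply SigmaA_nonaux; right; exists t; auto. Qed.
Lemma RA_body t a : In t RA -> In a (rbody t) -> ~ aux D a.
Proof. intros H Ha; apply SigmaA_nonaux; right; exists t; auto. Qed.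
Lemma D_head t : In t (rules D) -> ~ aux D (rhead t).
Proof. intros H; apply Sigma_nonaux; right; exists t; auto. Qed.
Lemma D_body t a : In t (rules D) -> In a (rbody t) -> ~ aux D a.
Proof. intros H Ha; apply Sigma_nonaux; right; exists t; auto. Qed.
Lemma D_lt t : In t (rules D) -> atom_of (rhead t) < NN D.
Proof. intros H; apply Sigma_lt; right; exists t; auto. Qed.

Lemma RA_lab1 t : In t RA -> ~ Lambda D (rlabel t).
Proof. intros H1 H2; apply (proj1 (proj2 modA) (rlabel t)); auto. left; exists t; auto. Qed.
Lemma RA_lab2 t : In t RA -> ~ Lambda (D2 D) (rlabel t).
Proof. intros H1 H2; apply (proj2 (proj2 modA) (rlabel t)); auto. left; exists t; auto. Qed.

Lemma rsup_X1 t u : rsup X1 t u <-> rsup D t u.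
Proof. unfold rsup, supR, X1, add; simpl; rewrite app_nil_r; tauto. Qed.
Lemma rsup_RA_l t u : In t RA -> ~ rsup D t u.
Proof. intros H1 H2; apply (RA_lab1 t H1); right; exists (rlabel u); left; exact H2. Qed.
Lemma rsup_RA_r t u : In u RA -> ~ rsup D t u.
Proof. intros H1 H2; apply (RA_lab1 u H1); right; exists (rlabel t); right; exact H2. Qed.

Lemma in_R_X1 q t : in_R X1 q t <-> (In t (rules D) \/ In t RA) /\ rhead t = q.
Proof. unfold in_R, X1, add; simpl; rewrite in_app_iff; tauto. Qed.
Lemma in_Rsd_X1 q t : in_Rsd X1 q t <-> (In t (rules D) \/ In t RA) /\ rhead t = q /\ (rkind_ t = Strict \/ rkind_ t = Defeasible).
Proof. unfold in_Rsd, X1, add; simpl; rewrite in_app_iff; tauto. Qed.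
Lemma in_Rs_X1 q t : in_Rs X1 q t <-> (In t (rules D) \/ In t RA) /\ rhead t = q /\ rkind_ t = Strict.
Proof. unfold in_Rs, X1, add; simpl; rewrite in_app_iff; tauto. Qed.
Lemma in_R_X2 q t : in_R X2 q t <-> (In t (rules (D2 D)) \/ In t RA) /\ rhead t = q.
Proof. unfold in_R, X2, add; simpl; rewrite in_app_iff; tauto. Qed.
Lemma facts_X1 q : In q (facts X1) <-> In q (facts D).
Proof. unfold X1, add; simpl; rewrite app_nil_r; tauto. Qed.
Lemma facts_X2 q : In q (facts X2) <-> In q (facts D).
Proof. unfold X2, add; simpl; rewrite app_nil_r; tauto. Qed.
Lemma facts_nonaux q : In q (facts D) -> ~ aux D q.
Proof. intros H; apply Sigma_nonaux; left; auto. Qed.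

Lemma rsup_X2 t u : rsup X2 t u <-> In (rlabel t, rlabel u) (sup (D2 D)).
Proof. unfold rsup, supR, X2, add; simpl; rewrite app_nil_r; tauto. Qed.

Lemma rsup_X2_mod t u : rsup X2 t u ->
  (rlabel t mod 8 = 6 \/ rlabel t mod 8 = 7) /\ (rlabel u mod 8 = 0 \/ rlabel u mod 8 = 3).
Proof.
  rewrite rsup_X2, in_supD2; intros [s [r [_ [_ [_ [_ [[_ [-> ->]]|[_ [_ [-> ->]]]]]]]]]];
  rewrite !lab_mod; lia.
Qed.

Lemma rsup_X2_GA s r : In s (rules D) -> In r (rules D) -> nondef r -> rhead s = compl (rhead r) ->
  (rsup X2 (GA D s r) (GC D r) <-> rsup D s r).
Proof.
  intros Hs Hr Hd He; rewrite rsup_X2, in_supD2; simpl; split.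
  - intros [s' [r' [Hs' [Hr' [Hd' [He' [[_ [H1 _]]|[_ [H2 [H1 H3]]]]]]]]]].
    + apply lab_inj in H1; lia.
    + apply lab_inj in H1; [|lia|lia]. destruct H1 as [_ [H4 H5]].
      unfold rsup, supR in *; rewrite H4, H5; auto.
  - intros H; exists s, r; repeat split; auto. right; repeat split; auto. apply sup_asym; auto.
Qed.

Lemma rsup_X2_GVA r s : In s (rules D) -> In r (rules D) -> nondef r -> rhead s = compl (rhead r) ->
  rsup D r s -> rsup X2 (GVA D r s) (GV D s).
Proof.
  intros Hs Hr Hd He H; rewrite rsup_X2, in_supD2; simpl.
  exists s, r; repeat split; auto.
Qed.

Lemma lab_GC r : rlabel (GC D r) mod 8 = 0. Proof. apply lab_mod; lia. Qed.
Lemma lab_GW r : rlabel (GW D r) mod 8 = 1. Proof. apply lab_mod; lia. Qed.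
Lemma lab_DC r : rlabel (DC D r) mod 8 = 2. Proof. apply lab_mod; lia. Qed.
Lemma lab_GV r : rlabel (GV D r) mod 8 = 3. Proof. apply lab_mod; lia. Qed.
Lemma lab_GVD r : rlabel (GVD D r) mod 8 = 4. Proof. apply lab_mod; lia. Qed.
Lemma lab_DV r : rlabel (DV D r) mod 8 = 5. Proof. apply lab_mod; lia. Qed.
Lemma lab_GA s r : rlabel (GA D s r) mod 8 = 6. Proof. apply lab_mod; lia. Qed.
Lemma lab_GVA s r : rlabel (GVA D s r) mod 8 = 7. Proof. apply lab_mod; lia. Qed.

Lemma rsup_X2_RA_l t u : In t RA -> ~ rsup X2 t u.
Proof.
  intros H1 H2; apply (RA_lab2 t H1); right; exists (rlabel u); left; apply rsup_X2; exact H2.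
Qed.
Lemma rsup_X2_RA_r t u : In u RA -> ~ rsup X2 t u.
Proof.
  intros H1 H2; apply (RA_lab2 u H1); right; exists (rlabel t); right; apply rsup_X2; exact H2.
Qed.

Lemma ca_inj r r' : In r (rules D) -> In r' (rules D) -> ca D r = ca D r' -> r = r'.
Proof. unfold ca; intros H1 H2 H3; apply lab_uniq; auto; lia. Qed.
Lemma va_inj r r' : In r (rules D) -> In r' (rules D) -> va D r = va D r' -> r = r'.
Proof. unfold va; intros H1 H2 H3; apply lab_uniq; auto; lia. Qed.
Lemma ca_va r r' : ca D r <> va D r'.
Proof. unfold ca, va; lia. Qed.

Lemma aux_ca r : In r (rules D) -> nondef r -> forall q, atom_of q = ca D r -> aux D q.
Proof. intros; exists r; split; auto. Qed.
Lemma aux_va r : In r (rules D) -> forall q, atom_of q = va D r -> aux D q.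
Proof. intros; exists r; split; auto. Qed.

Lemma inv_nonaux q t : ~ aux D q -> in_R X2 q t ->
  (In t RA /\ rhead t = q) \/
  (exists r, In r (rules D) /\ nondef r /\ t = GW D r /\ rhead r = q) \/
  (exists s, In s (rules D) /\ t = GVD D s /\ rhead s = q).
Proof.
  intros Hq; rewrite in_R_X2; intros [[Ht|Ht] Hh]; [|left; auto].
  apply in_D2 in Ht.
  destruct Ht as [[r [Hr [[Hd [ -> |[ -> | -> ]]]|[ -> |[ -> | -> ]]]]]|[s [r [Hs [Hr [Hd [He [[_ -> ]|[_ -> ]]]]]]]]];
    simpl in Hh; subst q;
    try (exfalso; apply Hq; first [ apply (aux_ca r); auto; fail | apply (aux_va r); auto; fail
                                  | apply (aux_va s); auto; fail ]).
  - right; left; exists r; auto.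
  - right; right; exists r; auto.
Qed.


Ltac kill_head Hh :=
  simpl in Hh;
  first [ discriminate Hh
        | (let Hx := fresh in pose proof (f_equal atom_of Hh) as Hx; cbn [atom_of] in Hx;
           exfalso; unfold ca, va in Hx; lia)
        | (exfalso; match type of Hh with rhead ?r = _ =>
             match goal with Hr : In r (rules D) |- _ =>
               let Hl := fresh in pose proof (D_lt _ Hr) as Hl; rewrite Hh in Hl; simpl in Hl;
               unfold ca, va in Hl; lia end end) ].

Ltac inv_tac Hh := apply in_D2 in Hh;
  let r := fresh "r" in let s := fresh "s" in let Hr := fresh "Hr" in let Hs := fresh "Hs" in
  let Hd := fresh "Hd" in let He := fresh "He" in let Hsup := fresh "Hsup" in
  destruct Hh as [[r [Hr [[Hd [ -> |[ -> | -> ]]]|[ -> |[ -> | -> ]]]]]|[s [r [Hs [Hr [Hd [He [[Hsup -> ]|[Hsup -> ]]]]]]]]].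

Lemma inv_c r t : In r (rules D) -> nondef r -> in_R X2 (Pos (ca D r)) t -> t = GC D r \/ t = DC D r.
Proof.
  intros Hr0 Hd0; rewrite in_R_X2; intros [[Ht|Ht] Hh].
  2:{ exfalso; apply (RA_head t Ht); rewrite Hh; apply (aux_ca r); auto. }
  inv_tac Ht; try kill_head Hh; apply (f_equal atom_of) in Hh; cbn [atom_of] in Hh; rename Hh into Hx; apply ca_inj in Hx; auto; subst; auto.
Qed.

Lemma inv_nc r t : In r (rules D) -> nondef r -> in_R X2 (Neg (ca D r)) t ->
  exists s, In s (rules D) /\ rhead s = compl (rhead r) /\ ~ rsup D r s /\ t = GA D s r.
Proof.
  intros Hr0 Hd0; rewrite in_R_X2; intros [[Ht|Ht] Hh].
  2:{ exfalso; apply (RA_head t Ht); rewrite Hh; apply (aux_ca r); auto. }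
  inv_tac Ht; try kill_head Hh; apply (f_equal atom_of) in Hh; cbn [atom_of] in Hh; rename Hh into Hx; apply ca_inj in Hx; auto; subst.
  exists s; auto.
Qed.

Lemma inv_v s t : In s (rules D) -> in_R X2 (Pos (va D s)) t -> t = GV D s \/ t = DV D s.
Proof.
  intros Hs0; rewrite in_R_X2; intros [[Ht|Ht] Hh].
  2:{ exfalso; apply (RA_head t Ht); rewrite Hh; apply (aux_va s); auto. }
  inv_tac Ht; try kill_head Hh; apply (f_equal atom_of) in Hh; cbn [atom_of] in Hh; rename Hh into Hx; apply va_inj in Hx; auto; subst; auto.
Qed.

Lemma inv_nv s t : In s (rules D) -> in_R X2 (Neg (va D s)) t ->
  exists r, In r (rules D) /\ nondef r /\ rhead s = compl (rhead r) /\ rsup D r s /\ t = GVA D r s.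
Proof.
  intros Hs0; rewrite in_R_X2; intros [[Ht|Ht] Hh].
  2:{ exfalso; apply (RA_head t Ht); rewrite Hh; apply (aux_va s); auto. }
  inv_tac Ht; try kill_head Hh; apply (f_equal atom_of) in Hh; cbn [atom_of] in Hh; rename Hh into Hx; apply va_inj in Hx; auto; subst.
  exists r; auto.
Qed.

Lemma GC_in r : In r (rules D) -> nondef r -> In (GC D r) (rules X2).
Proof. intros; unfold X2, add; simpl; apply in_or_app; left; apply in_D2; left; exists r; split; [auto|left; split; [auto|left; auto]]. Qed.
Lemma GW_in r : In r (rules D) -> nondef r -> In (GW D r) (rules X2).
Proof. intros; unfold X2, add; simpl; apply in_or_app; left; apply in_D2; left; exists r; split; [auto|left; split; [auto|right; left; auto]]. Qed.
Lemma GV_in r : In r (rules D) -> In (GV D r) (rules X2).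
Proof. intros; unfold X2, add; simpl; apply in_or_app; left; apply in_D2; left; exists r; split; [auto|right; left; auto]. Qed.
Lemma GVD_in r : In r (rules D) -> In (GVD D r) (rules X2).
Proof. intros; unfold X2, add; simpl; apply in_or_app; left; apply in_D2; left; exists r; split; [auto|right; right; left; auto]. Qed.
Lemma GA_in s r : In s (rules D) -> In r (rules D) -> nondef r -> rhead s = compl (rhead r) ->
  ~ rsup D r s -> In (GA D s r) (rules X2).
Proof. intros; unfold X2, add; simpl; apply in_or_app; left; apply in_D2; right; exists s, r; repeat (split; [auto|]); right; auto. Qed.
Lemma GVA_in s r : In s (rules D) -> In r (rules D) -> nondef r -> rhead s = compl (rhead r) ->
  rsup D r s -> In (GVA D r s) (rules X2).
Proof. intros; unfold X2, add; simpl; apply in_or_app; left; apply in_D2; right; exists s, r; repeat (split; [auto|]); left; auto. Qed.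
Lemma RA_in2 t : In t RA -> In t (rules X2).
Proof. intros; unfold X2, add; simpl; apply in_or_app; auto. Qed.
Lemma RA_in1 t : In t RA -> In t (rules X1).
Proof. intros; unfold X1, add; simpl; apply in_or_app; auto. Qed.
Lemma D_in1 t : In t (rules D) -> In t (rules X1).
Proof. intros; unfold X1, add; simpl; apply in_or_app; auto. Qed.


Lemma aux_compl q : aux D (compl q) <-> aux D q.
Proof. destruct q; unfold aux; simpl; tauto. Qed.
Lemma compl_invol q : compl (compl q) = q.
Proof. destruct q; auto. Qed.
Lemma head_swap r s : rhead s = compl (rhead r) -> rhead r = compl (rhead s).
Proof. intros H; rewrite H, compl_invol; auto. Qed.
Lemma Rs_R X q t : in_Rs X q t -> in_R X q t.
Proof. unfold in_Rs, in_R; tauto. Qed.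
Lemma Rsd_R X q t : in_Rsd X q t -> in_R X q t.
Proof. unfold in_Rsd, in_R; tauto. Qed.

Notation Der1 := (derives X1).
Notation Der2 := (derives X2).

Lemma aux_not_fact q : aux D q -> ~ In q (facts D).
Proof. intros H1 H2; apply (facts_nonaux q H2 H1). Qed.

Lemma ca_aux r : In r (rules D) -> nondef r -> aux D (Pos (ca D r)).
Proof. intros; apply (aux_ca r); auto. Qed.
Lemma nca_aux r : In r (rules D) -> nondef r -> aux D (Neg (ca D r)).
Proof. intros; apply (aux_ca r); auto. Qed.
Lemma va_aux r : In r (rules D) -> aux D (Pos (va D r)).
Proof. intros; apply (aux_va r); auto. Qed.
Lemma nva_aux r : In r (rules D) -> aux D (Neg (va D r)).
Proof. intros; apply (aux_va r); auto. Qed.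

Lemma mD_gen q : aux D q -> (forall t, in_R X2 q t -> rkind_ t <> Strict) -> Der2 (Minus, TDelta, q).
Proof.
  intros Ha H; apply closure; hnf; split.
  - rewrite facts_X2; apply aux_not_fact; auto.
  - intros t [Ht1 [Ht2 Ht3]]; exfalso; apply (H t); [split|]; auto.
Qed.
Lemma mD_nc r : In r (rules D) -> nondef r -> Der2 (Minus, TDelta, Neg (ca D r)).
Proof.
  intros Hr Hd; apply mD_gen; [apply nca_aux; auto|].
  intros t Ht; destruct (inv_nc r t Hr Hd Ht) as [s [_ [_ [_ ->]]]]; simpl; discriminate.
Qed.
Lemma mD_v s : In s (rules D) -> Der2 (Minus, TDelta, Pos (va D s)).
Proof.
  intros Hs; apply mD_gen; [apply va_aux; auto|].
  intros t Ht; destruct (inv_v s t Hs Ht) as [->| ->]; simpl; discriminate.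
Qed.
Lemma mD_nv s : In s (rules D) -> Der2 (Minus, TDelta, Neg (va D s)).
Proof.
  intros Hs; apply mD_gen; [apply nva_aux; auto|].
  intros t Ht; destruct (inv_nv s t Hs Ht) as [r [_ [_ [_ [_ ->]]]]]; simpl; discriminate.
Qed.
Lemma mD_c r : In r (rules D) -> nondef r -> (rkind_ r <> Strict \/ someM Der2 TDelta r) ->
  Der2 (Minus, TDelta, Pos (ca D r)).
Proof.
  intros Hr Hd H; apply closure; hnf; split.
  - rewrite facts_X2; apply aux_not_fact; apply ca_aux; auto.
  - intros t Ht; destruct (inv_c r t Hr Hd (Rs_R _ _ _ Ht)) as [->| ->].
    + destruct H as [H|H]; [exfalso; apply H; apply Ht|exact H].
    + exfalso; destruct Ht as [_ [_ Ht]]; discriminate.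
Qed.
Lemma pD_c r : In r (rules D) -> nondef r -> rkind_ r = Strict -> allP Der2 TDelta r ->
  Der2 (Plus, TDelta, Pos (ca D r)).
Proof.
  intros Hr Hd Hs H; apply closure; hnf; right; exists (GC D r); split; [|exact H].
  split; [apply GC_in; auto|split; auto].
Qed.
Lemma mD_c_head q r : In r (rules D) -> nondef r -> rhead r = q -> Der2 (Minus, TDelta, q) ->
  Der2 (Minus, TDelta, Pos (ca D r)).
Proof.
  intros Hr Hd Hh H.
  destruct (rkind_eq_dec (rkind_ r) Strict) as [Hs|Hs]; [|apply mD_c; auto].
  apply unfoldD in H; destruct H as [_ H].
  assert (Hw : in_Rs X2 q (GW D r)) by (split; [apply GW_in; auto|split; auto]).
  destruct (H (GW D r) Hw) as [a [Ha1 Ha2]].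
  destruct Ha1 as [<-|[]]; exact Ha2.
Qed.


Definition amb_pair d e := (d = TPd /\ e = TPd) \/ (d = TDel /\ e = TSig).
Lemma Tp_amb X E d e q : amb_pair d e -> T X E (Plus, d, q) = plus_amb X E d e q.
Proof. intros [[-> ->]|[-> ->]]; reflexivity. Qed.
Lemma Tm_amb X E d e q : amb_pair d e -> T X E (Minus, d, q) = minus_amb X E d e q.
Proof. intros [[-> ->]|[-> ->]]; reflexivity. Qed.

Lemma nondef_sd r : nondef r -> rkind_ r = Strict \/ rkind_ r = Defeasible.
Proof. unfold nondef; destruct (rkind_ r); auto; intros H; contradiction H; auto. Qed.

Lemma rsup_X2_GC_l r u : ~ rsup X2 (GC D r) u.
Proof. intros H; apply rsup_X2_mod in H; rewrite lab_GC in H; lia. Qed.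
Lemma rsup_X2_GV_l r u : ~ rsup X2 (GV D r) u.
Proof. intros H; apply rsup_X2_mod in H; rewrite lab_GV in H; lia. Qed.
Lemma rsup_X2_GW_l r u : ~ rsup X2 (GW D r) u.
Proof. intros H; apply rsup_X2_mod in H; rewrite lab_GW in H; lia. Qed.
Lemma rsup_X2_GW_r r u : ~ rsup X2 u (GW D r).
Proof. intros H; apply rsup_X2_mod in H; rewrite lab_GW in H; lia. Qed.
Lemma rsup_X2_GVD_r r u : ~ rsup X2 u (GVD D r).
Proof. intros H; apply rsup_X2_mod in H; rewrite lab_GVD in H; lia. Qed.


Lemma a_c_plus d e (Hde : amb_pair d e) r : In r (rules D) -> nondef r -> allP Der2 d r ->
  (forall s, In s (rules D) -> rhead s = compl (rhead r) -> ~ rsup D r s -> someM Der2 e s) ->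
  Der2 (Plus, d, Pos (ca D r)).
Proof.
  intros Hr Hd H1 H2; apply closure; rewrite (Tp_amb _ _ _ _ _ Hde); right; split; [|split].
  - exists (GC D r); split; [split; [apply GC_in; auto|split; [auto|apply nondef_sd; auto]]|exact H1].
  - apply mD_nc; auto.
  - intros s' Hs'; simpl in Hs'; destruct (inv_nc r s' Hr Hd Hs') as [s [Hs [He [Hn ->]]]].
    left; apply (H2 s Hs He Hn).
Qed.

Lemma a_c_minus d e (Hde : amb_pair d e) r : In r (rules D) -> nondef r -> Der2 (Minus, TDelta, Pos (ca D r)) ->
  (someM Der2 d r \/ exists s, In s (rules D) /\ rhead s = compl (rhead r) /\ ~ rsup D r s /\ allP Der2 e s) ->
  Der2 (Minus, d, Pos (ca D r)).
Proof.
  intros Hr Hd H0 H1; apply closure; rewrite (Tm_amb _ _ _ _ _ Hde); split; [exact H0|].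
  destruct H1 as [H1|[s [Hs [He [Hn H1]]]]].
  - left; intros t Ht; destruct (inv_c r t Hr Hd (Rsd_R _ _ _ Ht)) as [->| ->]; [exact H1|].
    exfalso; destruct Ht as [_ [_ [Ht|Ht]]]; discriminate.
  - right; right; exists (GA D s r); split; [split; [apply GA_in; auto|reflexivity]|split; [exact H1|]].
    intros t Ht; right; destruct (inv_c r t Hr Hd (Rsd_R _ _ _ Ht)) as [->| ->]; [apply rsup_X2_GC_l|].
    exfalso; destruct Ht as [_ [_ [Ht|Ht]]]; discriminate.
Qed.

Lemma a_c_minus_e d e (Hde : amb_pair d e) s : In s (rules D) -> nondef s -> Der2 (Minus, TDelta, Pos (ca D s)) ->
  (someM Der2 e s \/ exists r, In r (rules D) /\ rhead s = compl (rhead r) /\ rsup D r s /\ allP Der2 d r) ->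
  Der2 (Minus, e, Pos (ca D s)).
Proof.
  intros Hs Hd H0 H1. destruct Hde as [[-> ->]|[-> ->]].
  - apply (a_c_minus TPd TPd (or_introl (conj eq_refl eq_refl)) s); auto.
    destruct H1 as [H1|[r [Hr [He [Hn H1]]]]]; [left; auto|right].
    exists r; split; [auto|split; [apply head_swap; auto|split; [apply sup_asym; auto|auto]]].
  - apply closure; hnf; split; [exact H0|].
    intros t Ht; destruct (inv_c s t Hs Hd (Rsd_R _ _ _ Ht)) as [->| ->].
    2:{ exfalso; destruct Ht as [_ [_ [Ht|Ht]]]; discriminate. }
    destruct H1 as [H1|[r [Hr [He [Hn H1]]]]]; [left; exact H1|right].
    exists (GA D r s); split; [split; [apply GA_in; auto; [apply head_swap; auto|apply sup_asym; auto]|reflexivity]|].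
    split; [exact H1|]. apply rsup_X2_GA; auto. apply head_swap; auto.
Qed.

Lemma a_v_minus_e d e (Hde : amb_pair d e) s : In s (rules D) ->
  (someM Der2 e s \/ exists r, In r (rules D) /\ nondef r /\ rhead s = compl (rhead r) /\ rsup D r s /\ Der2 (Plus, d, Pos (ca D r))) ->
  Der2 (Minus, e, Pos (va D s)).
Proof.
  intros Hs H1. destruct Hde as [[-> ->]|[-> ->]]; apply closure; hnf; (split; [apply mD_v; auto|]).
  - destruct H1 as [H1|[r [Hr [Hdr [He [Hn H1]]]]]].
    + left; intros t Ht; destruct (inv_v s t Hs (Rsd_R _ _ _ Ht)) as [->| ->]; [exact H1|].
      exfalso; destruct Ht as [_ [_ [Ht|Ht]]]; discriminate.
    + right; right; exists (GVA D r s); split; [split; [apply GVA_in; auto|reflexivity]|split].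
      * intros a [<-|[]]; exact H1.
      * intros t Ht; right; destruct (inv_v s t Hs (Rsd_R _ _ _ Ht)) as [->| ->]; [apply rsup_X2_GV_l|].
        exfalso; destruct Ht as [_ [_ [Ht|Ht]]]; discriminate.
  - intros t Ht; destruct (inv_v s t Hs (Rsd_R _ _ _ Ht)) as [->| ->].
    2:{ exfalso; destruct Ht as [_ [_ [Ht|Ht]]]; discriminate. }
    destruct H1 as [H1|[r [Hr [Hdr [He [Hn H1]]]]]]; [left; exact H1|right].
    exists (GVA D r s); split; [split; [apply GVA_in; auto|reflexivity]|split].
    + intros a [<-|[]]; exact H1.
    + apply rsup_X2_GVA; auto.
Qed.

Lemma a_v_plus_e d e (Hde : amb_pair d e) s : In s (rules D) -> allP Der2 e s ->
  (forall r, In r (rules D) -> nondef r -> rhead s = compl (rhead r) -> rsup D r s -> Der2 (Minus, d, Pos (ca D r))) ->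
  Der2 (Plus, e, Pos (va D s)).
Proof.
  intros Hs H1 H2. destruct Hde as [[-> ->]|[-> ->]]; apply closure; hnf; right.
  - split; [|split].
    + exists (GV D s); split; [split; [apply GV_in; auto|split; [reflexivity|right; reflexivity]]|exact H1].
    + apply mD_nv; auto.
    + intros s' Hs'; simpl in Hs'; destruct (inv_nv s s' Hs Hs') as [r [Hr [Hdr [He [Hn ->]]]]].
      left; exists (Pos (ca D r)); split; [left; auto|apply H2; auto].
  - exists (GV D s); split; [split; [apply GV_in; auto|split; [reflexivity|right; reflexivity]]|split; [exact H1|]].
    intros s' Hs'; simpl in Hs'; destruct (inv_nv s s' Hs Hs') as [r [Hr [Hdr [He [Hn ->]]]]].
    left; exists (Pos (ca D r)); split; [left; auto|apply H2; auto].
Qed.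

Lemma a_c_plus_sig r : In r (rules D) -> nondef r -> allP Der2 TSig r ->
  (forall s, In s (rules D) -> rhead s = compl (rhead r) -> rsup D s r -> someM Der2 TDel s) ->
  Der2 (Plus, TSig, Pos (ca D r)).
Proof.
  intros Hr Hd H1 H2; apply closure; hnf; right.
  exists (GC D r); split; [split; [apply GC_in; auto|split; [auto|apply nondef_sd; auto]]|split; [exact H1|]].
  intros s' Hs'; simpl in Hs'; destruct (inv_nc r s' Hr Hd Hs') as [s [Hs [He [Hn ->]]]].
  destruct (classic (rsup D s r)) as [Hx|Hx]; [left; exact (H2 s Hs He Hx)|right].
  rewrite rsup_X2_GA; auto.
Qed.


Lemma compl_inj a b : compl a = compl b -> a = b.
Proof. intros H; rewrite <- (compl_invol a), <- (compl_invol b), H; auto. Qed.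

Lemma R_X1_D q s : In s (rules D) -> rhead s = q -> in_R X1 q s.
Proof. intros; apply in_R_X1; auto. Qed.
Lemma R_X1_A q s : In s RA -> rhead s = q -> in_R X1 q s.
Proof. intros; apply in_R_X1; auto. Qed.
Lemma Rsd_X1_D q s : In s (rules D) -> rhead s = q -> nondef s -> in_Rsd X1 q s.
Proof. intros; apply in_Rsd_X1; split; auto; split; auto; apply nondef_sd; auto. Qed.
Lemma Rsd_X1_A q s : In s RA -> rhead s = q -> (rkind_ s = Strict \/ rkind_ s = Defeasible) -> in_Rsd X1 q s.
Proof. intros; apply in_Rsd_X1; auto. Qed.
Lemma sd_nondef r : (rkind_ r = Strict \/ rkind_ r = Defeasible) -> nondef r.
Proof. unfold nondef; intros [H|H]; rewrite H; discriminate. Qed.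
Lemma GW_Rsd q r : In r (rules D) -> nondef r -> rhead r = q -> in_Rsd X2 q (GW D r).
Proof. intros; split; [apply GW_in; auto|split; auto; apply nondef_sd; auto]. Qed.
Lemma GW_R q r : In r (rules D) -> nondef r -> rhead r = q -> in_R X2 q (GW D r).
Proof. intros; split; [apply GW_in; auto|auto]. Qed.
Lemma GVD_R q r : In r (rules D) -> rhead r = q -> in_R X2 q (GVD D r).
Proof. intros; split; [apply GVD_in; auto|auto]. Qed.
Lemma RA_R2 q r : In r RA -> rhead r = q -> in_R X2 q r.
Proof. intros; split; [apply RA_in2; auto|auto]. Qed.
Lemma RA_Rsd2 q r : In r RA -> rhead r = q -> (rkind_ r = Strict \/ rkind_ r = Defeasible) -> in_Rsd X2 q r.
Proof. intros; split; [apply RA_in2; auto|auto]. Qed.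

Lemma H1plus d e (Hde : amb_pair d e) q : ~ aux D q ->
  (pl Der2 TDelta q \/ exists r, in_Rsd X1 q r /\ allP Der2 d r /\ mi Der2 TDelta (compl q) /\
     forall s, in_R X1 (compl q) s -> someM Der2 e s \/ rsup D r s) -> Der2 (Plus, d, q).
Proof.
  intros Hq [H|[r [Hr [H1 [H2 H3]]]]]; apply closure; rewrite (Tp_amb _ _ _ _ _ Hde); [left; exact H|right].
  assert (Hq' : ~ aux D (compl q)) by (rewrite aux_compl; auto).
  apply in_Rsd_X1 in Hr; destruct Hr as [[HrD|HrA] [Hh Hk]].
  - assert (Hc : Der2 (Plus, d, Pos (ca D r))).
    { apply a_c_plus with (e := e); auto; [apply sd_nondef; auto|].
      intros s Hs He Hn; rewrite Hh in He; destruct (H3 s (R_X1_D _ _ Hs He)) as [H4|H4]; [exact H4|contradiction]. }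
    split; [exists (GW D r); split; [apply GW_Rsd; auto; apply sd_nondef; auto|intros a [<-|[]]; exact Hc]|split; [exact H2|]].
    intros s' Hs'; left; destruct (inv_nonaux _ _ Hq' Hs') as [[HsA Hsh]|[[s0 [Hs0 [Hd0 [-> Hsh]]]]|[s0 [Hs0 [-> Hsh]]]]].
    + destruct (H3 s' (R_X1_A _ _ HsA Hsh)) as [H4|H4]; [exact H4|exfalso; exact (rsup_RA_r _ _ HsA H4)].
    + exists (Pos (ca D s0)); split; [left; auto|].
      apply a_c_minus_e with (d := d); auto; [eapply mD_c_head; eauto|].
      destruct (H3 s0 (R_X1_D _ _ Hs0 Hsh)) as [H4|H4]; [left; exact H4|right].
      exists r; split; [auto|split; [rewrite Hsh, Hh; auto|split; auto]].
    + exists (Pos (va D s0)); split; [left; auto|].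
      apply a_v_minus_e with (d := d); auto.
      destruct (H3 s0 (R_X1_D _ _ Hs0 Hsh)) as [H4|H4]; [left; exact H4|right].
      exists r; split; [auto|split; [apply sd_nondef; auto|split; [rewrite Hsh, Hh; auto|split; auto]]].
  - split; [exists r; split; [apply RA_Rsd2; auto|exact H1]|split; [exact H2|]].
    intros s' Hs'; left; destruct (inv_nonaux _ _ Hq' Hs') as [[HsA Hsh]|[[s0 [Hs0 [Hd0 [-> Hsh]]]]|[s0 [Hs0 [-> Hsh]]]]].
    + destruct (H3 s' (R_X1_A _ _ HsA Hsh)) as [H4|H4]; [exact H4|exfalso; exact (rsup_RA_l _ _ HrA H4)].
    + exists (Pos (ca D s0)); split; [left; auto|].
      apply a_c_minus_e with (d := d); auto; [eapply mD_c_head; eauto|].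
      destruct (H3 s0 (R_X1_D _ _ Hs0 Hsh)) as [H4|H4]; [left; exact H4|exfalso; exact (rsup_RA_l _ _ HrA H4)].
    + exists (Pos (va D s0)); split; [left; auto|].
      apply a_v_minus_e with (d := d); auto.
      destruct (H3 s0 (R_X1_D _ _ Hs0 Hsh)) as [H4|H4]; [left; exact H4|exfalso; exact (rsup_RA_l _ _ HrA H4)].
Qed.

Lemma H1minus d e (Hde : amb_pair d e) q : ~ aux D q -> mi Der2 TDelta q ->
  (forall r, in_Rsd X1 q r -> someM Der2 d r \/ pl Der2 TDelta (compl q) \/
     exists s, in_R X1 (compl q) s /\ allP Der2 e s /\ ~ rsup D r s) -> Der2 (Minus, d, q).
Proof.
  intros Hq H0 H; apply closure; rewrite (Tm_amb _ _ _ _ _ Hde); split; [exact H0|].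
  destruct (classic (pl Der2 TDelta (compl q))) as [HB|HB]; [right; left; exact HB|].
  destruct (classic (exists s, In s RA /\ rhead s = compl q /\ allP Der2 e s)) as [[s [Hs1 [Hs2 Hs3]]]|HC].
  { right; right; exists s; split; [apply RA_R2; auto|split; [exact Hs3|]].
    intros t _; right; apply rsup_X2_RA_r; auto. }
  assert (key : forall r, In r (rules D) -> nondef r -> rhead r = q -> Der2 (Minus, d, Pos (ca D r))).
  { intros r Hr Hd Hh; apply a_c_minus with (e := e); auto; [eapply mD_c_head; eauto|].
    destruct (H r (Rsd_X1_D _ _ Hr Hh Hd)) as [H1|[H1|[s [Hs [H2 H3]]]]]; [left; exact H1|contradiction|right].
    apply in_R_X1 in Hs; destruct Hs as [[Hs|Hs] Hsh].
    - exists s; split; [auto|split; [rewrite Hsh, Hh; auto|split; auto]].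
    - exfalso; apply HC; exists s; auto. }
  destruct (classic (forall t, In t RA -> rhead t = q -> (rkind_ t = Strict \/ rkind_ t = Defeasible) -> someM Der2 d t)) as [HA|HA].
  - left; intros t Ht.
    destruct (inv_nonaux _ _ Hq (Rsd_R _ _ _ Ht)) as [[HtA Hth]|[[r [Hr [Hd [-> Hrh]]]]|[s0 [Hs0 [-> Hsh]]]]].
    + apply HA; auto; apply Ht.
    + exists (Pos (ca D r)); split; [left; auto|apply key; auto].
    + exfalso; destruct Ht as [_ [_ [Ht|Ht]]]; discriminate.
  - apply not_all_ex_not in HA; destruct HA as [t HA].
    apply imply_to_and in HA; destruct HA as [HtA HA].
    apply imply_to_and in HA; destruct HA as [Hth HA].
    apply imply_to_and in HA; destruct HA as [Htk HA].
    destruct (H t (Rsd_X1_A _ _ HtA Hth Htk)) as [H1|[H1|[s [Hs [H2 H3]]]]]; [contradiction|contradiction|].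
    apply in_R_X1 in Hs; destruct Hs as [[Hs|Hs] Hsh]; [|exfalso; apply HC; exists s; auto].
    right; right; exists (GVD D s); split; [apply GVD_R; auto|split].
    + intros a [<-|[]]. apply a_v_plus_e with (d := d); auto.
      intros r' Hr' Hd' He' _; apply key; auto. apply compl_inj; rewrite <- He'; auto.
    + intros t' _; right; apply rsup_X2_GVD_r.
Qed.

Lemma H1sigplus q : ~ aux D q ->
  (pl Der2 TDelta q \/ exists r, in_Rsd X1 q r /\ allP Der2 TSig r /\
     forall s, in_R X1 (compl q) s -> someM Der2 TDel s \/ ~ rsup D s r) -> Der2 (Plus, TSig, q).
Proof.
  intros Hq [H|[r [Hr [H1 H3]]]]; apply closure; hnf; [left; exact H|right].
  apply in_Rsd_X1 in Hr; destruct Hr as [[HrD|HrA] [Hh Hk]].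
  - exists (GW D r); split; [apply GW_Rsd; auto; apply sd_nondef; auto|split].
    + intros a [<-|[]]; apply a_c_plus_sig; auto; [apply sd_nondef; auto|].
      intros s Hs He Hn; rewrite Hh in He; destruct (H3 s (R_X1_D _ _ Hs He)) as [H4|H4]; [exact H4|contradiction].
    + intros s _; right; apply rsup_X2_GW_r.
  - exists r; split; [apply RA_Rsd2; auto|split; [exact H1|]].
    intros s _; right; apply rsup_X2_RA_r; auto.
Qed.

Lemma H1sigminus q : ~ aux D q -> mi Der2 TDelta q ->
  (forall r, in_Rsd X1 q r -> someM Der2 TSig r \/
     exists s, in_R X1 (compl q) s /\ allP Der2 TDel s /\ rsup D s r) -> Der2 (Minus, TSig, q).
Proof.
  intros Hq H0 H; apply closure; hnf; split; [exact H0|].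
  intros t Ht.
  destruct (inv_nonaux _ _ Hq (Rsd_R _ _ _ Ht)) as [[HtA Hth]|[[r [Hr [Hd [-> Hrh]]]]|[s0 [Hs0 [-> Hsh]]]]].
  - destruct (H t (Rsd_X1_A _ _ HtA Hth ltac:(apply Ht))) as [H1|[s [_ [_ H1]]]]; [left; exact H1|].
    exfalso; exact (rsup_RA_r _ _ HtA H1).
  - left; exists (Pos (ca D r)); split; [left; auto|].
    apply a_c_minus_e with (d := TDel); [right; auto|auto|auto|eapply mD_c_head; eauto|].
    destruct (H r (Rsd_X1_D _ _ Hr Hrh Hd)) as [H1|[s [Hs [H2 H3]]]]; [left; exact H1|right].
    apply in_R_X1 in Hs; destruct Hs as [[Hs|Hs] Hsh]; [|exfalso; exact (rsup_RA_l _ _ Hs H3)].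
    exists s; split; [auto|split; [rewrite Hsh, Hrh, compl_invol; auto|split; auto]].
  - exfalso; destruct Ht as [_ [_ [Ht|Ht]]]; discriminate.
Qed.


Lemma H1pD q : ~ aux D q -> (In q (facts D) \/ exists r, in_Rs X1 q r /\ allP Der2 TDelta r) ->
  Der2 (Plus, TDelta, q).
Proof.
  intros Hq [H|[r [Hr H]]]; apply closure; hnf; [left; apply facts_X2; auto|right].
  apply in_Rs_X1 in Hr; destruct Hr as [[HrD|HrA] [Hh Hk]].
  - assert (Hd : nondef r) by (apply sd_nondef; auto).
    exists (GW D r); split; [split; [apply GW_in; auto|split; auto]|].
    intros a [<-|[]]; apply pD_c; auto.
  - exists r; split; [split; [apply RA_in2; auto|auto]|exact H].
Qed.

Lemma H1mD q : ~ aux D q -> ~ In q (facts D) -> (forall r, in_Rs X1 q r -> someM Der2 TDelta r) ->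
  Der2 (Minus, TDelta, q).
Proof.
  intros Hq H0 H; apply closure; hnf; split; [rewrite facts_X2; auto|].
  intros t Ht.
  destruct (inv_nonaux _ _ Hq (Rs_R _ _ _ Ht)) as [[HtA Hth]|[[r [Hr [Hd [-> Hrh]]]]|[s0 [Hs0 [-> Hsh]]]]].
  - apply H; apply in_Rs_X1; split; auto; apply Ht.
  - exists (Pos (ca D r)); split; [left; auto|]. apply mD_c; auto; right.
    apply H; apply in_Rs_X1; split; auto; split; auto; apply Ht.
  - exfalso; destruct Ht as [_ [_ Ht]]; discriminate.
Qed.

Definition S1 (tr : tag -> option tag) (c : concl) : Prop :=
  match c with (sg, t, q) => ~ aux D q ->
    match tr t with Some t' => Der2 (sg, t', q) | None => True end end.

Lemma X1_body r a : In r (rules X1) -> In a (rbody r) -> ~ aux D a.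
Proof.
  unfold X1, add; simpl; rewrite in_app_iff; intros [H|H] Ha; [eapply D_body|eapply RA_body]; eauto.
Qed.
Lemma R1_in q r : in_R X1 q r -> In r (rules X1).
Proof. intros H; apply H. Qed.
Lemma Rsd1_in q r : in_Rsd X1 q r -> In r (rules X1).
Proof. intros H; apply H. Qed.
Lemma Rs1_in q r : in_Rs X1 q r -> In r (rules X1).
Proof. intros H; apply H. Qed.

Lemma cv_allP tr t t' r : tr t = Some t' -> In r (rules X1) -> allP (S1 tr) t r -> allP Der2 t' r.
Proof.
  intros Ht Hr H a Ha; specialize (H a Ha); unfold pl, S1 in *; rewrite Ht in H; apply H.
  eapply X1_body; eauto.
Qed.
Lemma cv_someM tr t t' r : tr t = Some t' -> In r (rules X1) -> someM (S1 tr) t r -> someM Der2 t' r.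
Proof.
  intros Ht Hr [a [Ha H]]; exists a; split; auto; unfold mi, S1 in *; rewrite Ht in H; apply H.
  eapply X1_body; eauto.
Qed.
Lemma cv_pl tr t t' q : tr t = Some t' -> ~ aux D q -> pl (S1 tr) t q -> pl Der2 t' q.
Proof. intros Ht Hq H; unfold pl, S1 in *; rewrite Ht in H; apply H; auto. Qed.
Lemma cv_mi tr t t' q : tr t = Some t' -> ~ aux D q -> mi (S1 tr) t q -> mi Der2 t' q.
Proof. intros Ht Hq H; unfold mi, S1 in *; rewrite Ht in H; apply H; auto. Qed.

Section Conv.
Variable tr : tag -> option tag.
Hypothesis trD : tr TDelta = Some TDelta.
Variables d1 e1 d2 e2 : tag.
Hypothesis Hd : tr d1 = Some d2.
Hypothesis He : tr e1 = Some e2.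
Variable q : lit.
Hypothesis Hq : ~ aux D q.
Let Hq' : ~ aux D (compl q). Proof. rewrite aux_compl; auto. Qed.

Lemma cv_plus_star : plus_star X1 (S1 tr) d1 e1 q ->
  (pl Der2 TDelta q \/ exists r, in_Rsd X1 q r /\ allP Der2 d2 r /\ mi Der2 TDelta (compl q) /\
     forall s, in_R X1 (compl q) s -> someM Der2 e2 s \/ rsup D r s).
Proof.
  intros [H|[r [Hr [H1 [H2 H3]]]]]; [left; eapply cv_pl; eauto|right].
  exists r; split; [auto|split; [eapply cv_allP; eauto; eapply Rsd1_in; eauto|split; [eapply cv_mi; eauto|]]].
  intros s Hs; destruct (H3 s Hs) as [H4|H4]; [left; eapply cv_someM; eauto; eapply R1_in; eauto|right; apply rsup_X1; auto].
Qed.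

Lemma cv_minus_star : minus_star X1 (S1 tr) d1 e1 q ->
  mi Der2 TDelta q /\ (forall r, in_Rsd X1 q r -> someM Der2 d2 r \/ pl Der2 TDelta (compl q) \/
     exists s, in_R X1 (compl q) s /\ allP Der2 e2 s /\ ~ rsup D r s).
Proof.
  intros [H0 H]; split; [eapply cv_mi; eauto|].
  intros r Hr; destruct (H r Hr) as [H1|[H1|[s [Hs [H2 H3]]]]].
  - left; eapply cv_someM; eauto; eapply Rsd1_in; eauto.
  - right; left; eapply cv_pl; eauto.
  - right; right; exists s; split; [auto|split; [eapply cv_allP; eauto; eapply R1_in; eauto|]].
    intros H4; apply H3, rsup_X1; auto.
Qed.

Lemma cv_plus_sig : plus_sig X1 (S1 tr) d1 e1 q ->
  (pl Der2 TDelta q \/ exists r, in_Rsd X1 q r /\ allP Der2 d2 r /\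
     forall s, in_R X1 (compl q) s -> someM Der2 e2 s \/ ~ rsup D s r).
Proof.
  intros [H|[r [Hr [H1 H3]]]]; [left; eapply cv_pl; eauto|right].
  exists r; split; [auto|split; [eapply cv_allP; eauto; eapply Rsd1_in; eauto|]].
  intros s Hs; destruct (H3 s Hs) as [H4|H4]; [left; eapply cv_someM; eauto; eapply R1_in; eauto|right].
  intros H5; apply H4, rsup_X1; auto.
Qed.

Lemma cv_minus_sig : minus_sig X1 (S1 tr) d1 e1 q ->
  mi Der2 TDelta q /\ (forall r, in_Rsd X1 q r -> someM Der2 d2 r \/
     exists s, in_R X1 (compl q) s /\ allP Der2 e2 s /\ rsup D s r).
Proof.
  intros [H0 H]; split; [eapply cv_mi; eauto|].
  intros r Hr; destruct (H r Hr) as [H1|[s [Hs [H2 H3]]]].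
  - left; eapply cv_someM; eauto; eapply Rsd1_in; eauto.
  - right; exists s; split; [auto|split; [eapply cv_allP; eauto; eapply R1_in; eauto|apply rsup_X1; auto]].
Qed.

Lemma cv_pD : T X1 (S1 tr) (Plus, TDelta, q) -> In q (facts D) \/ exists r, in_Rs X1 q r /\ allP Der2 TDelta r.
Proof.
  intros [H|[r [Hr H]]]; [left; apply facts_X1; auto|right; exists r; split; auto].
  eapply cv_allP; eauto; eapply Rs1_in; eauto.
Qed.
Lemma cv_mD : T X1 (S1 tr) (Minus, TDelta, q) -> ~ In q (facts D) /\ forall r, in_Rs X1 q r -> someM Der2 TDelta r.
Proof.
  intros [H0 H]; split; [rewrite <- facts_X1; auto|].
  intros r Hr; apply (cv_someM tr TDelta TDelta r trD); [eapply Rs1_in; eauto|apply H; auto].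
Qed.
End Conv.

Definition tr_pd (t : tag) : option tag :=
  match t with TDelta => Some TDelta | TPdStar => Some TPd | _ => None end.
Definition tr_dl (t : tag) : option tag :=
  match t with TDelta => Some TDelta | TDelStar => Some TDel | TSigStar => Some TSig | _ => None end.

Lemma S1_pd_closed c : T X1 (S1 tr_pd) c -> S1 tr_pd c.
Proof.
  destruct c as [[sg t] q]; intros HT Hq; destruct sg, t; simpl; auto.
  - apply H1pD; auto; exact (cv_pD _ eq_refl q HT).
  - apply (H1plus TPd TPd (or_introl (conj eq_refl eq_refl))); auto.
    exact (cv_plus_star tr_pd eq_refl TPdStar TPdStar TPd TPd eq_refl eq_refl q Hq HT).
  - destruct (cv_mD tr_pd eq_refl q HT); apply H1mD; auto.
  - destruct (cv_minus_star tr_pd eq_refl TPdStar TPdStar TPd TPd eq_refl eq_refl q Hq HT).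
    apply (H1minus TPd TPd (or_introl (conj eq_refl eq_refl))); auto.
Qed.

Lemma S1_dl_closed c : T X1 (S1 tr_dl) c -> S1 tr_dl c.
Proof.
  destruct c as [[sg t] q]; intros HT Hq; destruct sg, t; simpl; auto.
  - apply H1pD; auto; exact (cv_pD _ eq_refl q HT).
  - apply (H1plus TDel TSig (or_intror (conj eq_refl eq_refl))); auto.
    exact (cv_plus_star tr_dl eq_refl TDelStar TSigStar TDel TSig eq_refl eq_refl q Hq HT).
  - apply H1sigplus; auto.
    exact (cv_plus_sig tr_dl eq_refl TSigStar TDelStar TSig TDel eq_refl eq_refl q Hq HT).
  - destruct (cv_mD tr_dl eq_refl q HT); apply H1mD; auto.
  - destruct (cv_minus_star tr_dl eq_refl TDelStar TSigStar TDel TSig eq_refl eq_refl q Hq HT).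
    apply (H1minus TDel TSig (or_intror (conj eq_refl eq_refl))); auto.
  - destruct (cv_minus_sig tr_dl eq_refl TSigStar TDelStar TSig TDel eq_refl eq_refl q Hq HT).
    apply H1sigminus; auto.
Qed.

Lemma dir1_pd c : Der1 c -> S1 tr_pd c.
Proof. apply Der_ind, S1_pd_closed. Qed.
Lemma dir1_dl c : Der1 c -> S1 tr_dl c.
Proof. apply Der_ind, S1_dl_closed. Qed.


Definition star_pair d e := (d = TPdStar /\ e = TPdStar) \/ (d = TDelStar /\ e = TSigStar).
Lemma Tp_star X E d e q : star_pair d e -> T X E (Plus, d, q) = plus_star X E d e q.
Proof. intros [[-> ->]|[-> ->]]; reflexivity. Qed.
Lemma Tm_star X E d e q : star_pair d e -> T X E (Minus, d, q) = minus_star X E d e q.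
Proof. intros [[-> ->]|[-> ->]]; reflexivity. Qed.

Definition DeltaP r := rkind_ r = Strict /\ allP Der1 TDelta r.
Definition DeltaM r := rkind_ r <> Strict \/ someM Der1 TDelta r.
Definition cP1 d e r := DeltaP r \/ (allP Der1 d r /\
  forall s, In s (rules D) -> rhead s = compl (rhead r) -> ~ rsup D r s -> someM Der1 e s).
Definition cM1 d e r := DeltaM r /\ (someM Der1 d r \/
  exists s, In s (rules D) /\ rhead s = compl (rhead r) /\ ~ rsup D r s /\ allP Der1 e s).
Definition cPs1 r := DeltaP r \/ (allP Der1 TSigStar r /\
  forall s, In s (rules D) -> rhead s = compl (rhead r) -> rsup D s r -> someM Der1 TDelStar s).
Definition cMs1 r := DeltaM r /\ (someM Der1 TSigStar r \/
  exists s, In s (rules D) /\ rhead s = compl (rhead r) /\ rsup D s r /\ allP Der1 TDelStar s).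
Definition vP1 d (Cm : rule -> Prop) s := allP Der1 d s /\
  forall r, In r (rules D) -> nondef r -> rhead s = compl (rhead r) -> rsup D r s -> Cm r.
Definition vM1 d (Cp : rule -> Prop) s := someM Der1 d s \/
  exists r, In r (rules D) /\ nondef r /\ rhead s = compl (rhead r) /\ rsup D r s /\ Cp r.

Lemma D_in_Rs1 q r : In r (rules D) -> rhead r = q -> rkind_ r = Strict -> in_Rs X1 q r.
Proof. intros; apply in_Rs_X1; auto. Qed.

Lemma pD_via q r : In r (rules D) -> rhead r = q -> DeltaP r -> Der1 (Plus, TDelta, q).
Proof.
  intros Hr Hh [Hk H]; apply closure; hnf; right; exists r; split; [apply D_in_Rs1; auto|exact H].
Qed.

Lemma H2pD q : In q (facts D) \/ (exists t, In t RA /\ rhead t = q /\ rkind_ t = Strict /\ allP Der1 TDelta t)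
  \/ (exists r, In r (rules D) /\ rhead r = q /\ DeltaP r) -> Der1 (Plus, TDelta, q).
Proof.
  intros [H|[[t [Ht [Hh [Hk H]]]]|[r [Hr [Hh H]]]]].
  - apply closure; hnf; left; apply facts_X1; auto.
  - apply closure; hnf; right; exists t; split; [apply in_Rs_X1; auto|exact H].
  - eapply pD_via; eauto.
Qed.

Lemma H2mD q : ~ In q (facts D) -> (forall t, In t RA -> rhead t = q -> rkind_ t = Strict -> someM Der1 TDelta t)
  -> (forall r, In r (rules D) -> nondef r -> rhead r = q -> DeltaM r) -> Der1 (Minus, TDelta, q).
Proof.
  intros H0 H1 H2; apply closure; hnf; split; [rewrite facts_X1; auto|].
  intros r Hr; apply in_Rs_X1 in Hr; destruct Hr as [[Hr|Hr] [Hh Hk]]; [|apply H1; auto].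
  destruct (H2 r Hr ltac:(apply sd_nondef; auto) Hh) as [H|H]; [contradiction|exact H].
Qed.

Section H2.
Variables d1 e1 : tag.
Hypothesis Hde : star_pair d1 e1.

Lemma via_r q r : In r (rules D) -> nondef r -> rhead r = q -> Der1 (Minus, TDelta, compl q) ->
  (forall s, In s RA -> rhead s = compl q -> someM Der1 e1 s) -> cP1 d1 e1 r -> Der1 (Plus, d1, q).
Proof.
  intros Hr Hd Hh H0 HA [HD|[H1 H2]]; apply closure; rewrite (Tp_star _ _ _ _ _ Hde).
  - left; eapply pD_via; eauto.
  - right; exists r; split; [apply Rsd_X1_D; auto|split; [exact H1|split; [exact H0|]]].
    intros s Hs; apply in_R_X1 in Hs; destruct Hs as [[Hs|Hs] Hsh]; [|left; apply HA; auto].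
    destruct (classic (rsup D r s)) as [Hx|Hx]; [right; apply rsup_X1; auto|left; apply H2; auto; rewrite Hsh, Hh; auto].
Qed.

Lemma H2plus q : ~ aux D q ->
  Der1 (Plus, TDelta, q) \/
  ((exists t, In t RA /\ rhead t = q /\ (rkind_ t = Strict \/ rkind_ t = Defeasible) /\ allP Der1 d1 t) \/
   (exists r, In r (rules D) /\ nondef r /\ rhead r = q /\ cP1 d1 e1 r)) /\
  Der1 (Minus, TDelta, compl q) /\
  (forall s, In s RA -> rhead s = compl q -> someM Der1 e1 s) /\
  (forall s, In s (rules D) -> rhead s = compl q -> vM1 e1 (cP1 d1 e1) s) ->
  Der1 (Plus, d1, q).
Proof.
  intros Hq [H|[[[t [Ht [Hh [Hk H1]]]]|[r [Hr [Hd [Hh H1]]]]] [H0 [HA HV]]]].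
  - apply closure; rewrite (Tp_star _ _ _ _ _ Hde); left; exact H.
  - destruct (classic (forall s, In s (rules D) -> rhead s = compl q -> someM Der1 e1 s)) as [HS|HS].
    + apply closure; rewrite (Tp_star _ _ _ _ _ Hde); right.
      exists t; split; [apply Rsd_X1_A; auto|split; [exact H1|split; [exact H0|]]].
      intros s Hs; left; apply in_R_X1 in Hs; destruct Hs as [[Hs|Hs] Hsh]; [apply HS|apply HA]; auto.
    + apply not_all_ex_not in HS; destruct HS as [s0 HS].
      apply imply_to_and in HS; destruct HS as [Hs0 HS].
      apply imply_to_and in HS; destruct HS as [Hsh HS].
      destruct (HV s0 Hs0 Hsh) as [H2|[r [Hr [Hd [He [Hn H2]]]]]]; [contradiction|].
      apply (via_r q r); auto. apply compl_inj; rewrite <- He; auto.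
  - apply (via_r q r); auto.
Qed.

Lemma H2minus q : ~ aux D q -> Der1 (Minus, TDelta, q) ->
  (((forall t, In t RA -> rhead t = q -> (rkind_ t = Strict \/ rkind_ t = Defeasible) -> someM Der1 d1 t) /\
    (forall r, In r (rules D) -> nondef r -> rhead r = q -> cM1 d1 e1 r)) \/
   Der1 (Plus, TDelta, compl q) \/
   (exists s, In s RA /\ rhead s = compl q /\ allP Der1 e1 s) \/
   (exists s, In s (rules D) /\ nondef s /\ rhead s = compl q /\ (DeltaP s \/ (allP Der1 e1 s /\
      forall r, In r (rules D) -> rhead r = compl (rhead s) -> rsup D r s -> someM Der1 d1 r))) \/
   (exists s, In s (rules D) /\ rhead s = compl q /\ vP1 e1 (cM1 d1 e1) s)) ->
  Der1 (Minus, d1, q).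
Proof.
  intros Hq H0 H; apply closure; rewrite (Tm_star _ _ _ _ _ Hde); split; [exact H0|].
  intros r Hr; apply in_Rsd_X1 in Hr; destruct Hr as [HrDA [Hh Hk]].
  destruct H as [[HA HD]|[HB|[[s [Hs [Hsh H1]]]|[[s [Hs [Hd [Hsh H1]]]]|[s [Hs [Hsh [H1 H2]]]]]]]].
  - destruct HrDA as [HrD|HrA]; [|left; apply HA; auto].
    destruct (HD r HrD (sd_nondef _ Hk) Hh) as [_ [H1|[s [Hs [He [Hn H1]]]]]]; [left; exact H1|right; right].
    exists s; split; [apply R_X1_D; auto; rewrite He, Hh; auto|split; [auto|rewrite rsup_X1; auto]].
  - right; left; exact HB.
  - right; right; exists s; split; [apply R_X1_A; auto|split; [exact H1|]].
    rewrite rsup_X1; apply rsup_RA_r; auto.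
  - destruct H1 as [H1|[H1 H2]]; [right; left; eapply pD_via; eauto|].
    destruct HrDA as [HrD|HrA].
    + destruct (classic (rsup D r s)) as [Hx|Hx].
      * left; apply H2; auto. rewrite Hh, Hsh, compl_invol; auto.
      * right; right; exists s; split; [apply R_X1_D; auto|split; [auto|rewrite rsup_X1; auto]].
    + right; right; exists s; split; [apply R_X1_D; auto|split; [auto|rewrite rsup_X1; apply rsup_RA_l; auto]].
  - destruct HrDA as [HrD|HrA].
    + destruct (classic (rsup D r s)) as [Hx|Hx].
      * destruct (H2 r HrD (sd_nondef _ Hk) ltac:(rewrite Hsh, Hh; auto) Hx) as [_ [H3|[s' [Hs' [He' [Hn' H3]]]]]];
          [left; exact H3|right; right].
        exists s'; split; [apply R_X1_D; auto; rewrite He', Hh; auto|split; [auto|rewrite rsup_X1; auto]].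
      * right; right; exists s; split; [apply R_X1_D; auto|split; [auto|rewrite rsup_X1; auto]].
    + right; right; exists s; split; [apply R_X1_D; auto|split; [auto|rewrite rsup_X1; apply rsup_RA_l; auto]].
Qed.
End H2.

Lemma H2sigplus q : ~ aux D q ->
  Der1 (Plus, TDelta, q) \/
  (exists t, In t RA /\ rhead t = q /\ (rkind_ t = Strict \/ rkind_ t = Defeasible) /\ allP Der1 TSigStar t) \/
  (exists r, In r (rules D) /\ nondef r /\ rhead r = q /\ cPs1 r) -> Der1 (Plus, TSigStar, q).
Proof.
  intros Hq [H|[[t [Ht [Hh [Hk H1]]]]|[r [Hr [Hd [Hh [HD|[H1 H2]]]]]]]]; apply closure; hnf.
  - left; exact H.
  - right; exists t; split; [apply Rsd_X1_A; auto|split; [exact H1|]].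
    intros s _; right; rewrite rsup_X1; apply rsup_RA_r; auto.
  - left; eapply pD_via; eauto.
  - right; exists r; split; [apply Rsd_X1_D; auto|split; [exact H1|]].
    intros s Hs; apply in_R_X1 in Hs; destruct Hs as [[Hs|Hs] Hsh]; [|right; rewrite rsup_X1; apply rsup_RA_l; auto].
    destruct (classic (rsup D s r)) as [Hx|Hx]; [left; apply H2; auto; rewrite Hsh, Hh; auto|right; rewrite rsup_X1; auto].
Qed.

Lemma H2sigminus q : ~ aux D q -> Der1 (Minus, TDelta, q) ->
  (forall t, In t RA -> rhead t = q -> (rkind_ t = Strict \/ rkind_ t = Defeasible) -> someM Der1 TSigStar t) ->
  (forall r, In r (rules D) -> nondef r -> rhead r = q -> cMs1 r) -> Der1 (Minus, TSigStar, q).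
Proof.
  intros Hq H0 HA HD; apply closure; hnf; split; [exact H0|].
  intros r Hr; apply in_Rsd_X1 in Hr; destruct Hr as [[HrD|HrA] [Hh Hk]]; [|left; apply HA; auto].
  destruct (HD r HrD (sd_nondef _ Hk) Hh) as [_ [H1|[s [Hs [He [Hn H1]]]]]]; [left; exact H1|right].
  exists s; split; [apply R_X1_D; auto; rewrite He, Hh; auto|split; [auto|apply rsup_X1; auto]].
Qed.


Definition S2 (tr2 : tag -> option tag) (Cp Vp : sign -> tag -> rule -> Prop) (c : concl) : Prop :=
  match c with (sg, t, q) =>
   (~ aux D q -> match tr2 t with Some t' => Der1 (sg, t', q) | None => True end) /\
   (forall r, In r (rules D) -> nondef r -> q = Pos (ca D r) -> Cp sg t r) /\
   (forall r, In r (rules D) -> nondef r -> q = Neg (ca D r) -> sg = Plus -> t = TDelta -> False) /\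
   (forall s, In s (rules D) -> q = Pos (va D s) -> Vp sg t s) /\
   (forall s, In s (rules D) -> q = Neg (va D s) -> sg = Plus -> t = TDelta -> False)
  end.

Section Ex.
Variable tr2 : tag -> option tag.
Variables Cp Vp : sign -> tag -> rule -> Prop.
Notation SS := (S2 tr2 Cp Vp).

Lemma ex_allP t t' r : tr2 t = Some t' -> (forall a, In a (rbody r) -> ~ aux D a) -> allP SS t r -> allP Der1 t' r.
Proof. intros Ht Hb H a Ha; specialize (H a Ha); unfold pl, S2 in H; destruct H as [H _]; rewrite Ht in H; apply H; auto. Qed.
Lemma ex_someM t t' r : tr2 t = Some t' -> (forall a, In a (rbody r) -> ~ aux D a) -> someM SS t r -> someM Der1 t' r.
Proof. intros Ht Hb [a [Ha H]]; exists a; split; auto; unfold mi, S2 in H; destruct H as [H _]; rewrite Ht in H; apply H; auto. Qed.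
Lemma ex_pl t t' q : tr2 t = Some t' -> ~ aux D q -> pl SS t q -> Der1 (Plus, t', q).
Proof. intros Ht Hq H; unfold pl, S2 in H; destruct H as [H _]; rewrite Ht in H; apply H; auto. Qed.
Lemma ex_mi t t' q : tr2 t = Some t' -> ~ aux D q -> mi SS t q -> Der1 (Minus, t', q).
Proof. intros Ht Hq H; unfold mi, S2 in H; destruct H as [H _]; rewrite Ht in H; apply H; auto. Qed.
Lemma ex_pl_c t r : In r (rules D) -> nondef r -> pl SS t (Pos (ca D r)) -> Cp Plus t r.
Proof. intros Hr Hd H; apply H; auto. Qed.
Lemma ex_mi_c t r : In r (rules D) -> nondef r -> mi SS t (Pos (ca D r)) -> Cp Minus t r.
Proof. intros Hr Hd H; apply H; auto. Qed.
Lemma ex_pl_nc r : In r (rules D) -> nondef r -> pl SS TDelta (Neg (ca D r)) -> False.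
Proof. intros Hr Hd H; destruct H as [_ [_ [H _]]]; exact (H r Hr Hd eq_refl eq_refl eq_refl). Qed.
Lemma ex_pl_v t s : In s (rules D) -> pl SS t (Pos (va D s)) -> Vp Plus t s.
Proof. intros Hs H; apply H; auto. Qed.
Lemma ex_mi_v t s : In s (rules D) -> mi SS t (Pos (va D s)) -> Vp Minus t s.
Proof. intros Hs H; apply H; auto. Qed.
Lemma ex_pl_nv s : In s (rules D) -> pl SS TDelta (Neg (va D s)) -> False.
Proof. intros Hs H; destruct H as [_ [_ [_ [_ H]]]]; exact (H s Hs eq_refl eq_refl eq_refl). Qed.
Lemma ex_GW_allP t r : In r (rules D) -> nondef r -> allP SS t (GW D r) -> Cp Plus t r.
Proof. intros Hr Hd H; apply ex_pl_c; auto; apply H; left; auto. Qed.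
Lemma ex_GW_someM t r : In r (rules D) -> nondef r -> someM SS t (GW D r) -> Cp Minus t r.
Proof. intros Hr Hd [a [[<-|[]] H]]; apply ex_mi_c; auto. Qed.
Lemma ex_GVA_allP t r s : In r (rules D) -> nondef r -> allP SS t (GVA D r s) -> Cp Plus t r.
Proof. intros Hr Hd H; apply ex_pl_c; auto; apply H; left; auto. Qed.
Lemma ex_GVA_someM t r s : In r (rules D) -> nondef r -> someM SS t (GVA D r s) -> Cp Minus t r.
Proof. intros Hr Hd [a [[<-|[]] H]]; apply ex_mi_c; auto. Qed.
Lemma ex_GVD_allP t s : In s (rules D) -> allP SS t (GVD D s) -> Vp Plus t s.
Proof. intros Hs H; apply ex_pl_v; auto; apply H; left; auto. Qed.
Lemma ex_GVD_someM t s : In s (rules D) -> someM SS t (GVD D s) -> Vp Minus t s.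
Proof. intros Hs [a [[<-|[]] H]]; apply ex_mi_v; auto. Qed.

Lemma Dbody r : In r (rules D) -> forall a, In a (rbody r) -> ~ aux D a.
Proof. intros; eapply D_body; eauto. Qed.
Lemma Abody r : In r RA -> forall a, In a (rbody r) -> ~ aux D a.
Proof. intros; eapply RA_body; eauto. Qed.

Lemma noPD_nc E r : In r (rules D) -> nondef r -> T X2 E (Plus, TDelta, Neg (ca D r)) -> False.
Proof.
  intros Hr Hd [H|[t [Ht _]]]; [apply facts_X2 in H; apply (aux_not_fact _ (nca_aux r Hr Hd) H)|].
  destruct (inv_nc r t Hr Hd (Rs_R _ _ _ Ht)) as [s [_ [_ [_ ->]]]]; destruct Ht as [_ [_ Ht]]; discriminate.
Qed.
Lemma noPD_v E s : In s (rules D) -> T X2 E (Plus, TDelta, Pos (va D s)) -> False.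
Proof.
  intros Hs [H|[t [Ht _]]]; [apply facts_X2 in H; apply (aux_not_fact _ (va_aux s Hs) H)|].
  destruct (inv_v s t Hs (Rs_R _ _ _ Ht)) as [->| ->]; destruct Ht as [_ [_ Ht]]; discriminate.
Qed.
Lemma noPD_nv E s : In s (rules D) -> T X2 E (Plus, TDelta, Neg (va D s)) -> False.
Proof.
  intros Hs [H|[t [Ht _]]]; [apply facts_X2 in H; apply (aux_not_fact _ (nva_aux s Hs) H)|].
  destruct (inv_nv s t Hs (Rs_R _ _ _ Ht)) as [r [_ [_ [_ [_ ->]]]]]; destruct Ht as [_ [_ Ht]]; discriminate.
Qed.

Hypothesis trD : tr2 TDelta = Some TDelta.
Hypothesis HCpD : forall r, Cp Plus TDelta r -> DeltaP r.
Hypothesis HCmD : forall r, Cp Minus TDelta r -> DeltaM r.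

Lemma C_pD r : In r (rules D) -> nondef r -> T X2 SS (Plus, TDelta, Pos (ca D r)) -> DeltaP r.
Proof.
  intros Hr Hd [H|[t [Ht H]]]; [exfalso; apply facts_X2 in H; apply (aux_not_fact _ (ca_aux r Hr Hd) H)|].
  destruct (inv_c r t Hr Hd (Rs_R _ _ _ Ht)) as [->| ->]; destruct Ht as [_ [_ Ht]]; [|discriminate].
  split; [exact Ht|]. apply (ex_allP TDelta TDelta r trD (Dbody r Hr) H).
Qed.
Lemma C_mD r : In r (rules D) -> nondef r -> T X2 SS (Minus, TDelta, Pos (ca D r)) -> DeltaM r.
Proof.
  intros Hr Hd [_ H].
  destruct (rkind_eq_dec (rkind_ r) Strict) as [Hs|Hs]; [right|left; auto].
  apply (ex_someM TDelta TDelta r trD (Dbody r Hr)); apply (H (GC D r)); split; [apply GC_in; auto|split; auto].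
Qed.

Lemma C_pamb d2 e2 d1 e1 (Hde : amb_pair d2 e2) (Hd2 : tr2 d2 = Some d1) (He2 : tr2 e2 = Some e1) r :
  In r (rules D) -> nondef r -> T X2 SS (Plus, d2, Pos (ca D r)) -> cP1 d1 e1 r.
Proof.
  intros Hr Hd HT; rewrite (Tp_amb _ _ _ _ _ Hde) in HT.
  destruct HT as [H|[[t [Ht H1]] [_ H3]]]; [left; apply HCpD, (ex_pl_c TDelta r Hr Hd H)|right].
  destruct (inv_c r t Hr Hd (Rsd_R _ _ _ Ht)) as [->| ->]; [|exfalso; destruct Ht as [_ [_ [Ht|Ht]]]; discriminate].
  split; [apply (ex_allP d2 d1 r Hd2 (Dbody r Hr) H1)|].
  intros s Hs He Hn.
  destruct (H3 (GA D s r)) as [H4|[t' [Ht' [_ H4]]]].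
  - split; [apply GA_in; auto|reflexivity].
  - apply (ex_someM e2 e1 s He2 (Dbody s Hs) H4).
  - exfalso; destruct (inv_c r t' Hr Hd (Rsd_R _ _ _ Ht')) as [->| ->].
    + apply rsup_X2_mod in H4; rewrite lab_GC in H4; lia.
    + destruct Ht' as [_ [_ [Ht'|Ht']]]; discriminate.
Qed.

Lemma C_mamb d2 e2 d1 e1 (Hde : amb_pair d2 e2) (Hd2 : tr2 d2 = Some d1) (He2 : tr2 e2 = Some e1) r :
  In r (rules D) -> nondef r -> T X2 SS (Minus, d2, Pos (ca D r)) -> cM1 d1 e1 r.
Proof.
  intros Hr Hd HT; rewrite (Tm_amb _ _ _ _ _ Hde) in HT.
  destruct HT as [H0 [H|[H|[s' [Hs' [H1 _]]]]]]; (split; [apply HCmD, (ex_mi_c TDelta r Hr Hd H0)|]).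
  - left; apply (ex_someM d2 d1 r Hd2 (Dbody r Hr)); apply (H (GC D r)).
    split; [apply GC_in; auto|split; auto; apply nondef_sd; auto].
  - exfalso; apply (ex_pl_nc r Hr Hd H).
  - right; destruct (inv_nc r s' Hr Hd Hs') as [s [Hs [He [Hn ->]]]].
    exists s; split; [auto|split; [auto|split; [auto|]]].
    apply (ex_allP e2 e1 s He2 (Dbody s Hs) H1).
Qed.

Lemma C_psig (HtS : tr2 TSig = Some TSigStar) (HtD : tr2 TDel = Some TDelStar) r :
  In r (rules D) -> nondef r -> T X2 SS (Plus, TSig, Pos (ca D r)) -> cPs1 r.
Proof.
  intros Hr Hd HT; hnf in HT.
  destruct HT as [H|[t [Ht [H1 H3]]]]; [left; apply HCpD, (ex_pl_c TDelta r Hr Hd H)|right].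
  destruct (inv_c r t Hr Hd (Rsd_R _ _ _ Ht)) as [->| ->]; [|exfalso; destruct Ht as [_ [_ [Ht|Ht]]]; discriminate].
  split; [apply (ex_allP TSig TSigStar r HtS (Dbody r Hr) H1)|].
  intros s Hs He Hx.
  destruct (H3 (GA D s r)) as [H4|H4].
  - split; [apply GA_in; auto; apply sup_asym; auto|reflexivity].
  - apply (ex_someM TDel TDelStar s HtD (Dbody s Hs) H4).
  - exfalso; apply H4; apply rsup_X2_GA; auto.
Qed.

Lemma C_msig (HtS : tr2 TSig = Some TSigStar) (HtD : tr2 TDel = Some TDelStar) r :
  In r (rules D) -> nondef r -> T X2 SS (Minus, TSig, Pos (ca D r)) -> cMs1 r.
Proof.
  intros Hr Hd HT; hnf in HT; destruct HT as [H0 H].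
  split; [apply HCmD, (ex_mi_c TDelta r Hr Hd H0)|].
  destruct (H (GC D r)) as [H1|[s' [Hs' [H1 H2]]]].
  - split; [apply GC_in; auto|split; auto; apply nondef_sd; auto].
  - left; apply (ex_someM TSig TSigStar r HtS (Dbody r Hr) H1).
  - right; destruct (inv_nc r s' Hr Hd Hs') as [s [Hs [He [Hn ->]]]].
    exists s; split; [auto|split; [auto|split; [apply (rsup_X2_GA s r); auto|]]].
    apply (ex_allP TDel TDelStar s HtD (Dbody s Hs) H1).
Qed.

Hypothesis HVpD : forall s, Vp Plus TDelta s -> False.

Lemma V_pamb (Ht : tr2 TPd = Some TPdStar) s :
  In s (rules D) -> T X2 SS (Plus, TPd, Pos (va D s)) -> vP1 TPdStar (Cp Minus TPd) s.
Proof.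
  intros Hs HT; hnf in HT.
  destruct HT as [H|[[t [Ht' H1]] [_ H3]]]; [exfalso; apply (HVpD s), (ex_pl_v TDelta s Hs H)|].
  destruct (inv_v s t Hs (Rsd_R _ _ _ Ht')) as [->| ->]; [|exfalso; destruct Ht' as [_ [_ [Ht'|Ht']]]; discriminate].
  split; [apply (ex_allP TPd TPdStar s Ht (Dbody s Hs) H1)|].
  intros r Hr Hd He Hx.
  destruct (H3 (GVA D r s)) as [H4|[t' [Ht'' [_ H4]]]].
  - split; [apply GVA_in; auto|reflexivity].
  - apply (ex_GVA_someM TPd r s Hr Hd H4).
  - exfalso; destruct (inv_v s t' Hs (Rsd_R _ _ _ Ht'')) as [->| ->].
    + apply rsup_X2_mod in H4; rewrite lab_GV in H4; lia.
    + destruct Ht'' as [_ [_ [Ht''|Ht'']]]; discriminate.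
Qed.

Lemma V_mamb (Ht : tr2 TPd = Some TPdStar) s :
  In s (rules D) -> T X2 SS (Minus, TPd, Pos (va D s)) -> vM1 TPdStar (Cp Plus TPd) s.
Proof.
  intros Hs HT; hnf in HT.
  destruct HT as [H0 [H|[H|[s' [Hs' [H1 _]]]]]].
  - left; apply (ex_someM TPd TPdStar s Ht (Dbody s Hs)); apply (H (GV D s)).
    split; [apply GV_in; auto|split; auto].
  - exfalso; apply (ex_pl_nv s Hs H).
  - right; destruct (inv_nv s s' Hs Hs') as [r [Hr [Hd [He [Hx ->]]]]].
    exists r; split; [auto|split; [auto|split; [auto|split; [auto|]]]].
    apply (ex_GVA_allP TPd r s Hr Hd H1).
Qed.

Lemma V_psig (HtS : tr2 TSig = Some TSigStar) s :
  In s (rules D) -> T X2 SS (Plus, TSig, Pos (va D s)) -> vP1 TSigStar (Cp Minus TDel) s.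
Proof.
  intros Hs HT; hnf in HT.
  destruct HT as [H|[t [Ht' [H1 H3]]]]; [exfalso; apply (HVpD s), (ex_pl_v TDelta s Hs H)|].
  destruct (inv_v s t Hs (Rsd_R _ _ _ Ht')) as [->| ->]; [|exfalso; destruct Ht' as [_ [_ [Ht'|Ht']]]; discriminate].
  split; [apply (ex_allP TSig TSigStar s HtS (Dbody s Hs) H1)|].
  intros r Hr Hd He Hx.
  destruct (H3 (GVA D r s)) as [H4|H4].
  - split; [apply GVA_in; auto|reflexivity].
  - apply (ex_GVA_someM TDel r s Hr Hd H4).
  - exfalso; apply H4; apply rsup_X2_GVA; auto.
Qed.

Lemma V_msig (HtS : tr2 TSig = Some TSigStar) s :
  In s (rules D) -> T X2 SS (Minus, TSig, Pos (va D s)) -> vM1 TSigStar (Cp Plus TDel) s.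
Proof.
  intros Hs HT; hnf in HT; destruct HT as [H0 H].
  destruct (H (GV D s)) as [H1|[s' [Hs' [H1 H2]]]].
  - split; [apply GV_in; auto|split; auto].
  - left; apply (ex_someM TSig TSigStar s HtS (Dbody s Hs) H1).
  - right; destruct (inv_nv s s' Hs Hs') as [r [Hr [Hd [He [Hx ->]]]]].
    exists r; split; [auto|split; [auto|split; [auto|split; [auto|]]]].
    apply (ex_GVA_allP TDel r s Hr Hd H1).
Qed.

End Ex.


Section H2conv.
Variable tr2 : tag -> option tag.
Variables Cp Vp : sign -> tag -> rule -> Prop.
Notation SS := (S2 tr2 Cp Vp).
Hypothesis trD : tr2 TDelta = Some TDelta.
Hypothesis HCpD : forall r, Cp Plus TDelta r -> DeltaP r.
Hypothesis HCmD : forall r, Cp Minus TDelta r -> DeltaM r.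
Variable q : lit.
Hypothesis Hq : ~ aux D q.
Let Hq' : ~ aux D (compl q). Proof. rewrite aux_compl; auto. Qed.

Lemma h_pD : T X2 SS (Plus, TDelta, q) ->
  In q (facts D) \/ (exists t, In t RA /\ rhead t = q /\ rkind_ t = Strict /\ allP Der1 TDelta t)
  \/ (exists r, In r (rules D) /\ rhead r = q /\ DeltaP r).
Proof.
  intros [H|[t [Ht H]]]; [left; apply facts_X2; auto|right].
  destruct (inv_nonaux _ _ Hq (Rs_R _ _ _ Ht)) as [[HtA Hth]|[[r [Hr [Hd [-> Hrh]]]]|[s0 [Hs0 [-> Hsh]]]]].
  - left; exists t; split; [auto|split; [auto|split; [apply Ht|]]]. apply (ex_allP tr2 Cp Vp TDelta TDelta t trD (Abody t HtA) H).
  - right; exists r; split; [auto|split; [auto|]]. apply HCpD, (ex_GW_allP tr2 Cp Vp TDelta r Hr Hd H).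
  - exfalso; destruct Ht as [_ [_ Ht]]; discriminate.
Qed.

Lemma h_mD : T X2 SS (Minus, TDelta, q) ->
  ~ In q (facts D) /\ (forall t, In t RA -> rhead t = q -> rkind_ t = Strict -> someM Der1 TDelta t) /\
  (forall r, In r (rules D) -> nondef r -> rhead r = q -> DeltaM r).
Proof.
  intros [H0 H]; split; [rewrite <- facts_X2; auto|split].
  - intros t Ht Hh Hk; apply (ex_someM tr2 Cp Vp TDelta TDelta t trD (Abody t Ht)), H; split; [apply RA_in2; auto|auto].
  - intros r Hr Hd Hh. destruct (rkind_eq_dec (rkind_ r) Strict) as [Hs|Hs]; [|left; auto].
    apply HCmD, (ex_GW_someM tr2 Cp Vp TDelta r Hr Hd), H; split; [apply GW_in; auto|split; auto].
Qed.

Lemma h_pamb d2 e2 d1 e1 (Hde : amb_pair d2 e2) (Hd2 : tr2 d2 = Some d1) (He2 : tr2 e2 = Some e1)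
  (HCp : forall r, In r (rules D) -> nondef r -> Cp Plus d2 r -> cP1 d1 e1 r)
  (HVm : forall s, In s (rules D) -> Vp Minus e2 s -> vM1 e1 (cP1 d1 e1) s) :
  T X2 SS (Plus, d2, q) ->
  Der1 (Plus, TDelta, q) \/
  ((exists t, In t RA /\ rhead t = q /\ (rkind_ t = Strict \/ rkind_ t = Defeasible) /\ allP Der1 d1 t) \/
   (exists r, In r (rules D) /\ nondef r /\ rhead r = q /\ cP1 d1 e1 r)) /\
  Der1 (Minus, TDelta, compl q) /\
  (forall s, In s RA -> rhead s = compl q -> someM Der1 e1 s) /\
  (forall s, In s (rules D) -> rhead s = compl q -> vM1 e1 (cP1 d1 e1) s).
Proof.
  rewrite (Tp_amb _ _ _ _ _ Hde).
  intros [H|[[t [Ht H1]] [H2 H3]]]; [left; apply (ex_pl tr2 Cp Vp TDelta TDelta q trD Hq H)|right].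
  split; [|split; [apply (ex_mi tr2 Cp Vp TDelta TDelta _ trD Hq' H2)|split]].
  - destruct (inv_nonaux _ _ Hq (Rsd_R _ _ _ Ht)) as [[HtA Hth]|[[r [Hr [Hd [-> Hrh]]]]|[s0 [Hs0 [-> Hsh]]]]].
    + left; exists t; split; [auto|split; [auto|split; [apply Ht|]]]. apply (ex_allP tr2 Cp Vp d2 d1 t Hd2 (Abody t HtA) H1).
    + right; exists r; split; [auto|split; [auto|split; [auto|]]]. apply HCp; auto; apply (ex_GW_allP tr2 Cp Vp d2 r Hr Hd H1).
    + exfalso; destruct Ht as [_ [_ [Ht|Ht]]]; discriminate.
  - intros s Hs Hsh; destruct (H3 s (RA_R2 _ _ Hs Hsh)) as [H4|[t' [_ [_ H4]]]].
    + apply (ex_someM tr2 Cp Vp e2 e1 s He2 (Abody s Hs) H4).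
    + exfalso; apply (rsup_X2_RA_r t' s Hs H4).
  - intros s Hs Hsh; destruct (H3 (GVD D s) (GVD_R _ _ Hs Hsh)) as [H4|[t' [_ [_ H4]]]].
    + apply HVm; auto; apply (ex_GVD_someM tr2 Cp Vp e2 s Hs H4).
    + exfalso; apply (rsup_X2_GVD_r s t' H4).
Qed.

Lemma h_mamb d2 e2 d1 e1 (Hde : amb_pair d2 e2) (Hd2 : tr2 d2 = Some d1) (He2 : tr2 e2 = Some e1)
  (HCm : forall r, In r (rules D) -> nondef r -> Cp Minus d2 r -> cM1 d1 e1 r)
  (HCpe : forall s, In s (rules D) -> nondef s -> Cp Plus e2 s -> DeltaP s \/ (allP Der1 e1 s /\
      forall r, In r (rules D) -> rhead r = compl (rhead s) -> rsup D r s -> someM Der1 d1 r))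
  (HVp : forall s, In s (rules D) -> Vp Plus e2 s -> vP1 e1 (cM1 d1 e1) s) :
  T X2 SS (Minus, d2, q) ->
  Der1 (Minus, TDelta, q) /\
  (((forall t, In t RA -> rhead t = q -> (rkind_ t = Strict \/ rkind_ t = Defeasible) -> someM Der1 d1 t) /\
    (forall r, In r (rules D) -> nondef r -> rhead r = q -> cM1 d1 e1 r)) \/
   Der1 (Plus, TDelta, compl q) \/
   (exists s, In s RA /\ rhead s = compl q /\ allP Der1 e1 s) \/
   (exists s, In s (rules D) /\ nondef s /\ rhead s = compl q /\ (DeltaP s \/ (allP Der1 e1 s /\
      forall r, In r (rules D) -> rhead r = compl (rhead s) -> rsup D r s -> someM Der1 d1 r))) \/
   (exists s, In s (rules D) /\ rhead s = compl q /\ vP1 e1 (cM1 d1 e1) s)).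
Proof.
  rewrite (Tm_amb _ _ _ _ _ Hde).
  intros [H0 [H|[H|[s' [Hs' [H1 _]]]]]]; (split; [apply (ex_mi tr2 Cp Vp TDelta TDelta q trD Hq H0)|]).
  - left; split.
    + intros t Ht Hh Hk; apply (ex_someM tr2 Cp Vp d2 d1 t Hd2 (Abody t Ht)), H; apply RA_Rsd2; auto.
    + intros r Hr Hd Hh; apply HCm; auto; apply (ex_GW_someM tr2 Cp Vp d2 r Hr Hd), H; apply GW_Rsd; auto.
  - right; left; apply (ex_pl tr2 Cp Vp TDelta TDelta _ trD Hq' H).
  - right; right.
    destruct (inv_nonaux _ _ Hq' Hs') as [[HtA Hth]|[[r [Hr [Hd [-> Hrh]]]]|[s0 [Hs0 [-> Hsh]]]]].
    + left; exists s'; split; [auto|split; [auto|]]. apply (ex_allP tr2 Cp Vp e2 e1 s' He2 (Abody s' HtA) H1).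
    + right; left; exists r; split; [auto|split; [auto|split; [auto|]]].
      apply HCpe; auto; apply (ex_GW_allP tr2 Cp Vp e2 r Hr Hd H1).
    + right; right; exists s0; split; [auto|split; [auto|]]. apply HVp; auto; apply (ex_GVD_allP tr2 Cp Vp e2 s0 Hs0 H1).
Qed.

Lemma h_psig (HtS : tr2 TSig = Some TSigStar) (HCps : forall r, In r (rules D) -> nondef r -> Cp Plus TSig r -> cPs1 r) :
  T X2 SS (Plus, TSig, q) ->
  Der1 (Plus, TDelta, q) \/
  (exists t, In t RA /\ rhead t = q /\ (rkind_ t = Strict \/ rkind_ t = Defeasible) /\ allP Der1 TSigStar t) \/
  (exists r, In r (rules D) /\ nondef r /\ rhead r = q /\ cPs1 r).
Proof.
  intros [H|[t [Ht [H1 _]]]]; [left; apply (ex_pl tr2 Cp Vp TDelta TDelta q trD Hq H)|right].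
  destruct (inv_nonaux _ _ Hq (Rsd_R _ _ _ Ht)) as [[HtA Hth]|[[r [Hr [Hd [-> Hrh]]]]|[s0 [Hs0 [-> Hsh]]]]].
  - left; exists t; split; [auto|split; [auto|split; [apply Ht|]]]. apply (ex_allP tr2 Cp Vp TSig TSigStar t HtS (Abody t HtA) H1).
  - right; exists r; split; [auto|split; [auto|split; [auto|]]]. apply HCps; auto; apply (ex_GW_allP tr2 Cp Vp TSig r Hr Hd H1).
  - exfalso; destruct Ht as [_ [_ [Ht|Ht]]]; discriminate.
Qed.

Lemma h_msig (HtS : tr2 TSig = Some TSigStar) (HCms : forall r, In r (rules D) -> nondef r -> Cp Minus TSig r -> cMs1 r) :
  T X2 SS (Minus, TSig, q) ->
  Der1 (Minus, TDelta, q) /\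
  (forall t, In t RA -> rhead t = q -> (rkind_ t = Strict \/ rkind_ t = Defeasible) -> someM Der1 TSigStar t) /\
  (forall r, In r (rules D) -> nondef r -> rhead r = q -> cMs1 r).
Proof.
  intros [H0 H]; split; [apply (ex_mi tr2 Cp Vp TDelta TDelta q trD Hq H0)|split].
  - intros t Ht Hh Hk; destruct (H t (RA_Rsd2 _ _ Ht Hh Hk)) as [H1|[s' [_ [_ H1]]]].
    + apply (ex_someM tr2 Cp Vp TSig TSigStar t HtS (Abody t Ht) H1).
    + exfalso; apply (rsup_X2_RA_r s' t Ht H1).
  - intros r Hr Hd Hh; destruct (H (GW D r) (GW_Rsd _ _ Hr Hd Hh)) as [H1|[s' [_ [_ H1]]]].
    + apply HCms; auto; apply (ex_GW_someM tr2 Cp Vp TSig r Hr Hd H1).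
    + exfalso; apply (rsup_X2_GW_r r s' H1).
Qed.
End H2conv.

Definition tr2_pd (t : tag) : option tag :=
  match t with TDelta => Some TDelta | TPd => Some TPdStar | _ => None end.
Definition Cp_pd (sg : sign) (t : tag) (r : rule) : Prop :=
  match sg, t with
  | Plus, TDelta => DeltaP r | Minus, TDelta => DeltaM r
  | Plus, TPd => cP1 TPdStar TPdStar r | Minus, TPd => cM1 TPdStar TPdStar r
  | _, _ => True end.
Definition Vp_pd (sg : sign) (t : tag) (s : rule) : Prop :=
  match sg, t with
  | Plus, TDelta => False
  | Plus, TPd => vP1 TPdStar (cM1 TPdStar TPdStar) s
  | Minus, TPd => vM1 TPdStar (cP1 TPdStar TPdStar) s
  | _, _ => True end.

Lemma pd_HCpe s : In s (rules D) -> nondef s -> Cp_pd Plus TPd s -> DeltaP s \/ (allP Der1 TPdStar s /\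
      forall r, In r (rules D) -> rhead r = compl (rhead s) -> rsup D r s -> someM Der1 TPdStar r).
Proof.
  intros Hs Hd [H|[H1 H2]]; [left; auto|right; split; auto].
  intros r Hr He Hx; apply H2; auto; apply sup_asym; auto.
Qed.

Definition ampd : amb_pair TPd TPd := or_introl (conj eq_refl eq_refl).
Definition spd : star_pair TPdStar TPdStar := or_introl (conj eq_refl eq_refl).

Lemma S2_pd_closed c : T X2 (S2 tr2_pd Cp_pd Vp_pd) c -> S2 tr2_pd Cp_pd Vp_pd c.
Proof.
  destruct c as [[sg t] q]; intros HT; split; [|split; [|split; [|split]]].
  - intros Hq; destruct sg, t; simpl; auto.
    + apply H2pD; exact (h_pD tr2_pd Cp_pd Vp_pd eq_refl (fun r H => H) q Hq HT).
    + apply (H2plus TPdStar TPdStar spd); auto.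
      exact (h_pamb tr2_pd Cp_pd Vp_pd eq_refl q Hq TPd TPd TPdStar TPdStar ampd eq_refl eq_refl
               (fun r _ _ H => H) (fun s _ H => H) HT).
    + destruct (h_mD tr2_pd Cp_pd Vp_pd eq_refl (fun r H => H) q HT) as [H1 [H2 H3]]; apply H2mD; auto.
    + destruct (h_mamb tr2_pd Cp_pd Vp_pd eq_refl q Hq TPd TPd TPdStar TPdStar ampd eq_refl eq_refl
               (fun r _ _ H => H) pd_HCpe (fun s _ H => H) HT) as [H0 H1].
      apply (H2minus TPdStar TPdStar spd); auto.
  - intros r Hr Hd ->; destruct sg, t; simpl; auto.
    + exact (C_pD tr2_pd Cp_pd Vp_pd eq_refl r Hr Hd HT).
    + exact (C_pamb tr2_pd Cp_pd Vp_pd (fun r H => H) TPd TPd TPdStar TPdStar ampd eq_refl eq_refl r Hr Hd HT).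
    + exact (C_mD tr2_pd Cp_pd Vp_pd eq_refl r Hr Hd HT).
    + exact (C_mamb tr2_pd Cp_pd Vp_pd (fun r H => H) TPd TPd TPdStar TPdStar ampd eq_refl eq_refl r Hr Hd HT).
  - intros r Hr Hd -> -> ->; exact (noPD_nc _ r Hr Hd HT).
  - intros s Hs ->; destruct sg, t; simpl; auto.
    + exact (noPD_v _ s Hs HT).
    + exact (V_pamb tr2_pd Cp_pd Vp_pd (fun s H => H) eq_refl s Hs HT).
    + exact (V_mamb tr2_pd Cp_pd Vp_pd eq_refl s Hs HT).
  - intros s Hs -> -> ->; exact (noPD_nv _ s Hs HT).
Qed.

Lemma dir2_pd c : Der2 c -> S2 tr2_pd Cp_pd Vp_pd c.
Proof. apply Der_ind, S2_pd_closed. Qed.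


Definition tr2_dl (t : tag) : option tag :=
  match t with TDelta => Some TDelta | TDel => Some TDelStar | TSig => Some TSigStar | _ => None end.
Definition Cp_dl (sg : sign) (t : tag) (r : rule) : Prop :=
  match sg, t with
  | Plus, TDelta => DeltaP r | Minus, TDelta => DeltaM r
  | Plus, TDel => cP1 TDelStar TSigStar r | Minus, TDel => cM1 TDelStar TSigStar r
  | Plus, TSig => cPs1 r | Minus, TSig => cMs1 r
  | _, _ => True end.
Definition Vp_dl (sg : sign) (t : tag) (s : rule) : Prop :=
  match sg, t with
  | Plus, TDelta => False
  | Plus, TSig => vP1 TSigStar (cM1 TDelStar TSigStar) s
  | Minus, TSig => vM1 TSigStar (cP1 TDelStar TSigStar) s
  | _, _ => True end.

Definition amdl : amb_pair TDel TSig := or_intror (conj eq_refl eq_refl).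
Definition sdl : star_pair TDelStar TSigStar := or_intror (conj eq_refl eq_refl).

Lemma S2_dl_closed c : T X2 (S2 tr2_dl Cp_dl Vp_dl) c -> S2 tr2_dl Cp_dl Vp_dl c.
Proof.
  destruct c as [[sg t] q]; intros HT; split; [|split; [|split; [|split]]].
  - intros Hq; destruct sg, t; simpl; auto.
    + apply H2pD; exact (h_pD tr2_dl Cp_dl Vp_dl eq_refl (fun r H => H) q Hq HT).
    + apply (H2plus TDelStar TSigStar sdl); auto.
      exact (h_pamb tr2_dl Cp_dl Vp_dl eq_refl q Hq TDel TSig TDelStar TSigStar amdl eq_refl eq_refl
               (fun r _ _ H => H) (fun s _ H => H) HT).
    + apply H2sigplus; auto.
      exact (h_psig tr2_dl Cp_dl Vp_dl eq_refl q Hq eq_refl (fun r _ _ H => H) HT).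
    + destruct (h_mD tr2_dl Cp_dl Vp_dl eq_refl (fun r H => H) q HT) as [H1 [H2 H3]]; apply H2mD; auto.
    + destruct (h_mamb tr2_dl Cp_dl Vp_dl eq_refl q Hq TDel TSig TDelStar TSigStar amdl eq_refl eq_refl
               (fun r _ _ H => H) (fun s _ _ H => H) (fun s _ H => H) HT) as [H0 H1].
      apply (H2minus TDelStar TSigStar sdl); auto.
    + destruct (h_msig tr2_dl Cp_dl Vp_dl eq_refl q Hq eq_refl (fun r _ _ H => H) HT) as [H0 [H1 H2]].
      apply H2sigminus; auto.
  - intros r Hr Hd ->; destruct sg, t; simpl; auto.
    + exact (C_pD tr2_dl Cp_dl Vp_dl eq_refl r Hr Hd HT).
    + exact (C_pamb tr2_dl Cp_dl Vp_dl (fun r H => H) TDel TSig TDelStar TSigStar amdl eq_refl eq_refl r Hr Hd HT).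
    + exact (C_psig tr2_dl Cp_dl Vp_dl (fun r H => H) eq_refl eq_refl r Hr Hd HT).
    + exact (C_mD tr2_dl Cp_dl Vp_dl eq_refl r Hr Hd HT).
    + exact (C_mamb tr2_dl Cp_dl Vp_dl (fun r H => H) TDel TSig TDelStar TSigStar amdl eq_refl eq_refl r Hr Hd HT).
    + exact (C_msig tr2_dl Cp_dl Vp_dl (fun r H => H) eq_refl eq_refl r Hr Hd HT).
  - intros r Hr Hd -> -> ->; exact (noPD_nc _ r Hr Hd HT).
  - intros s Hs ->; destruct sg, t; simpl; auto.
    + exact (noPD_v _ s Hs HT).
    + exact (V_psig tr2_dl Cp_dl Vp_dl (fun s H => H) eq_refl s Hs HT).
    + exact (V_msig tr2_dl Cp_dl Vp_dl eq_refl s Hs HT).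
  - intros s Hs -> -> ->; exact (noPD_nv _ s Hs HT).
Qed.

Lemma dir2_dl c : Der2 c -> S2 tr2_dl Cp_dl Vp_dl c.
Proof. apply Der_ind, S2_dl_closed. Qed.

Lemma Sigma_X1_nonaux q : Sigma X1 q -> ~ aux D q.
Proof.
  unfold X1, add; intros [H|[r [Hr H]]]; simpl in *.
  - rewrite app_nil_r in H; apply facts_nonaux; auto.
  - apply in_app_iff in Hr; destruct Hr as [Hr|Hr].
    + apply Sigma_nonaux; right; exists r; auto.
    + apply SigmaA_nonaux; right; exists r; auto.
Qed.

Lemma main_pd q : Sigma X1 q ->
  (Der1 (Plus, TPdStar, q) <-> Der2 (Plus, TPd, q)) /\ (Der1 (Minus, TPdStar, q) <-> Der2 (Minus, TPd, q)).
Proof.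
  intros Hs; apply Sigma_X1_nonaux in Hs.
  split; split; intros H.
  - exact (dir1_pd _ H Hs).
  - exact (proj1 (dir2_pd _ H) Hs).
  - exact (dir1_pd _ H Hs).
  - exact (proj1 (dir2_pd _ H) Hs).
Qed.

Lemma main_dl q : Sigma X1 q ->
  (Der1 (Plus, TDelStar, q) <-> Der2 (Plus, TDel, q)) /\ (Der1 (Minus, TDelStar, q) <-> Der2 (Minus, TDel, q)).
Proof.
  intros Hs; apply Sigma_X1_nonaux in Hs.
  split; split; intros H.
  - exact (dir1_dl _ H Hs).
  - exact (proj1 (dir2_dl _ H) Hs).
  - exact (dir1_dl _ H Hs).
  - exact (proj1 (dir2_dl _ H) Hs).
Qed.

End Setting.

Lemma NoDup_map_inj_on {A B} (f : A -> B) l :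
  NoDup l -> (forall x y, In x l -> In y l -> f x = f y -> x = y) -> NoDup (map f l).
Proof.
  induction l as [|a l IH]; simpl; intros Hn Hi; [constructor|].
  inversion Hn as [|? ? Hn1 Hn2]; subst; constructor.
  - intros Hm; apply in_map_iff in Hm; destruct Hm as [x [Hx1 Hx2]].
    assert (x = a) by (apply Hi; auto). subst; contradiction.
  - apply IH; auto.
Qed.

Lemma wf_D2 D : wf_theory D -> wf_theory (D2 D).
Proof.
  intros wfD; split.
  - apply NoDup_map_inj_on; [apply NoDup_nodup|].
    intros x y Hx Hy Heq.
    apply in_D2 in Hx; apply in_D2 in Hy.
    destruct Hx as [[r [Hr [[Hd [ -> |[ -> | -> ]]]|[ -> |[ -> | -> ]]]]]|[s [r [Hs [Hr [Hd [He [[Hsup -> ]|[Hsup -> ]]]]]]]]];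
    destruct Hy as [[r' [Hr' [[Hd' [ -> |[ -> | -> ]]]|[ -> |[ -> | -> ]]]]]|[s' [r' [Hs' [Hr' [Hd' [He' [[Hsup' -> ]|[Hsup' -> ]]]]]]]]];
    simpl in Heq; apply lab_inj in Heq; try lia; destruct Heq as [Hk [Ha Hb]]; try discriminate;
    repeat match goal with
    | H : rlabel ?a = rlabel ?b |- _ =>
        let E := fresh in assert (E : a = b) by (apply (lab_uniq D wfD); auto); clear H; subst
    end; reflexivity.
  - intros x Hx.
    assert (forall a b, clos_trans label (supR (D2 D)) a b ->
              (a mod 8 = 6 \/ a mod 8 = 7) /\ (b mod 8 = 0 \/ b mod 8 = 3)) as Hc.
    { intros a b H; induction H as [a b H|a b c H1 IH1 H2 IH2].
      - unfold supR in H; apply in_supD2 in H.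
        destruct H as [s [r [_ [_ [_ [_ [[_ [-> ->]]|[_ [_ [-> ->]]]]]]]]]]; rewrite !lab_mod; lia.
      - split; [apply IH1|apply IH2]. }
    destruct (Hc x x Hx); lia.
Qed.

Theorem theorem12 : simulates TPdStar TPd /\ simulates TDelStar TDel.
Proof.
  split; intros D1 wf1; exists (D2 D1); split; [apply wf_D2; auto| |apply wf_D2; auto|];
    intros RA A wfA modA q Hq.
  - exact (main_pd D1 wf1 RA modA q Hq).
  - exact (main_dl D1 wf1 RA modA q Hq).
Qed.
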